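(* Let $n$ be a non-negative integer and $r,s\in\mathbb{C}\setminus\mathbb{Z}^{-}$ with $s\ne0$ and $r-s\notin\mathbb{Z}^{-}$. Then \[ \sum_{k=0}^{n-1}\frac{H_{n-1-k}}{(k+s)\binom{r+k+1}{r-s+1}}=\frac{H_n}{s\binom{r}{s}}-\frac{1}{r-s+1}\sum_{k=1}^{n}\frac{1}{k\binom{n-k+r}{r-s+1}}. \] In particular, for every real $s\geq1$, \[ \sum_{k=0}^{n}\frac{H_{n-k}}{(k+s)(k+1+s)}=\frac{n+1}{s(n+1+s)}H_{n+1}-\frac{1}{n+1+s}(H_{n+s}-H_{s-1}) \] and \[ \sum_{k=0}^{n}\frac{H_{n-k}}{(k+s)(k+1+s)(k+2+s)}=\frac12\left(\frac{H_{n+1}}{s(s+1)}-\frac{1}{n+1+s}(H_{n+1}+H_{n+s}-H_{s-1})+\frac{1}{n+2+s}(H_{n+1}+H_{n+1+s}-H_s)\right). \]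
   Context: $\mathbb{Z}^{-}$ denotes the set of negative integers. For complex $z$ not a negative integer, $H_z=\psi(z+1)+\gamma$ ($\psi$ the digamma function, $\gamma$ Euler's constant); for integers $m\geq 0$, $H_m=\sum_{j=1}^m1/j$. Binomial coefficients with complex entries: $\binom{x}{y}=\frac{\Gamma(x+1)}{\Gamma(y+1)\Gamma(x-y+1)}$. *)

(* Defs.v *)
From Stdlib Require Import Reals ClassicalEpsilon Arith Factorial.
From Coquelicot Require Import Coquelicot.
Open Scope C_scope.

Fixpoint csum (f : nat -> C) (n : nat) : C :=
  match n with O => 0 | S m => csum f m + f m end.

Fixpoint cprod (f : nat -> C) (n : nat) : C :=
  match n with O => 1 | S m => cprod f m * f m end.

Definition Hn (m : nat) : C := csum (fun j => / RtoC (INR (S j))) m.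

Definition not_negint (z : C) : Prop := forall m : nat, z <> - RtoC (INR (S m)).

(* real power a^z = exp (z ln a) for a > 0 real, z complex *)
Definition rpowC (a : R) (z : C) : C :=
  (exp (Re z * ln a) * cos (Im z * ln a), exp (Re z * ln a) * sin (Im z * ln a))%R.

(* Gauss's product formula : Gamma z = lim_m m! m^z / (z (z+1) ... (z+m)) *)
Definition gauss_seq (z : C) (m : nat) : C :=
  RtoC (INR (fact m)) * rpowC (INR m) z / cprod (fun j => z + RtoC (INR j)) (S m).

Definition CGamma (z : C) : C :=
  epsilon (inhabits (RtoC 0)) (fun l : C => filterlim (gauss_seq z) eventually (locally l)).

Definition Cderiv (f : C -> C) (z : C) : C :=
  epsilon (inhabits (RtoC 0))
    (fun l : C => @is_derive C_AbsRing C_NormedModule f z l).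

Definition digamma (z : C) : C := Cderiv CGamma z / CGamma z.

Definition euler_gamma : R :=
  real (Lim_seq (fun n => (Re (Hn n) - ln (INR n))%R)).

Definition Hc (z : C) : C := digamma (z + 1) + RtoC euler_gamma.

Definition cbinom (x y : C) : C :=
  CGamma (x + 1) / (CGamma (y + 1) * CGamma (x - y + 1)).

(* Main.v *)
Require Import Defs.
From Stdlib Require Import Reals.
From Stdlib Require Import Lra Lia Psatz ZArith.
From Coquelicot Require Import Coquelicot.
Open Scope C_scope.

Open Scope C_scope.

Definition cexp (w : C) : C :=
  (exp (Re w) * cos (Im w), exp (Re w) * sin (Im w))%R.

Lemma C_ext (a b : C) : Re a = Re b -> Im a = Im b -> a = b.
Proof. destruct a, b; simpl; intros; subst; reflexivity. Qed.

Lemma cexp_plus a b : cexp (a + b) = cexp a * cexp b.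
Proof.
  destruct a as [x1 y1], b as [x2 y2]. unfold cexp, Cplus, Cmult; simpl.
  rewrite exp_plus, cos_plus, sin_plus. apply C_ext; simpl; ring.
Qed.

Lemma cexp_0 : cexp 0 = 1.
Proof. unfold cexp; simpl. rewrite exp_0, cos_0, sin_0. apply C_ext; simpl; ring. Qed.

Lemma cexp_RtoC (x : R) : cexp (RtoC x) = RtoC (exp x).
Proof. unfold cexp; simpl. rewrite cos_0, sin_0. apply C_ext; simpl; ring. Qed.

Lemma Cmod_cexp w : Cmod (cexp w) = exp (Re w).
Proof.
  assert (H2 : (Cmod (cexp w) ^ 2 = exp (Re w) ^ 2)%R).
  { rewrite Cmod2_alt. unfold cexp; simpl. pose proof (sin2_cos2 (Im w)). unfold Rsqr in H.
    transitivity (exp (Re w) * (exp (Re w)) * (sin (Im w) * sin (Im w) + cos (Im w) * cos (Im w)))%R.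
    ring. rewrite H; ring. }
  pose proof (Cmod_ge_0 (cexp w)). pose proof (exp_pos (Re w)).
  apply Rsqr_inj; [lra|lra|]. unfold Rsqr. simpl in H2. lra.
Qed.

Lemma cexp_neq0 w : cexp w <> 0.
Proof. intro H. pose proof (Cmod_cexp w). rewrite H, Cmod_0 in H0.
  pose proof (exp_pos (Re w)). lra. Qed.

Lemma rpowC_cexp a z : rpowC a z = cexp (z * RtoC (ln a)).
Proof. unfold rpowC, cexp. destruct z as [x y]; simpl. apply C_ext; simpl; f_equal; f_equal; ring. Qed.

Open Scope R_scope.
Lemma exp_up (x : R) : (x < 1)%R -> (exp x <= / (1 - x))%R.
Proof.
  intro H. pose proof (exp_ineq1_le (-x)). rewrite exp_Ropp in H0.
  pose proof (exp_pos x).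
  apply (Rmult_le_reg_l (1 - x)); [lra|]. rewrite Rinv_r by lra.
  apply (Rmult_le_reg_r (/ exp x)). apply Rinv_0_lt_compat; lra.
  rewrite Rmult_assoc, Rinv_r by lra. lra.
Qed.

Lemma exp_taylor1 (x : R) : (Rabs x <= /2)%R -> (Rabs (exp x - 1 - x) <= 2 * x^2)%R.
Proof.
  intro H. pose proof (exp_ineq1_le x).
  assert (x < 1)%R by (apply Rabs_le_between in H; lra).
  pose proof (exp_up x H1).
  rewrite Rabs_right by lra.
  assert (/ (1 - x) - 1 - x = x^2 / (1-x))%R by (field; lra).
  assert (x^2 / (1 - x) <= 2 * x^2)%R.
  { apply Rabs_le_between in H. unfold Rdiv.
    apply Rmult_le_reg_r with (1 - x); [lra|]. rewrite Rmult_assoc, Rinv_l by lra.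
    nra. }
  lra.
Qed.

Lemma exp_taylor0 (x : R) : (Rabs x <= /2)%R -> (Rabs (exp x - 1) <= 2 * Rabs x)%R.
Proof.
  intro H. pose proof (exp_taylor1 x H).
  apply Rabs_le_between in H0. apply Rabs_le_between in H as H'.
  assert (x ^2 <= Rabs x * /2)%R.
  { rewrite <- (pow2_abs x). simpl. rewrite Rmult_1_r.
    apply Rmult_le_compat_l; [apply Rabs_pos| lra]. }
  apply Rabs_le_between. split.
  - destruct (Rle_dec 0 x). rewrite Rabs_right in * by lra. nra.
    rewrite Rabs_left in * by lra. nra.
  - destruct (Rle_dec 0 x). rewrite Rabs_right in * by lra. nra.
    rewrite Rabs_left in * by lra. nra.
Qed.

Lemma sin_bnds (y : R) : (0 <= y <= 1)%R -> (y - y^3/6 <= sin y <= y)%R.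
Proof.
intros. destruct (pre_sin_bound y 0) as [H1 H2]; try lra.
unfold sin_approx in H1, H2. simpl in H1, H2. unfold sin_term in H1,H2. simpl in H1, H2.
field_simplify in H1. field_simplify in H2. split. lra.
assert (y^5 <= y^3 * 1)%R. replace (y^5)%R with (y^3 * y^2)%R by ring. apply Rmult_le_compat_l. apply pow_le; lra. nra.
lra.
Qed.

Lemma sin_taylor (y : R) : Rabs y <= 1 -> Rabs (sin y - y) <= y^2.
Proof.
  intro H. destruct (Rle_dec 0 y).
  - rewrite Rabs_right in H by lra. destruct (sin_bnds y) as [A B]; [lra|].
    rewrite Rabs_left1 by lra.
    assert (y^3 <= y^2 * 1) by (replace (y^3) with (y^2*y) by ring; apply Rmult_le_compat_l; [apply pow2_ge_0|lra]).
    lra.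
  - rewrite Rabs_left in H by lra. destruct (sin_bnds (-y)) as [A B]; [lra|].
    rewrite sin_neg in A, B.
    rewrite Rabs_right by lra.
    assert ((-y)^3 <= (-y)^2 * 1) by (replace ((-y)^3) with ((-y)^2*(-y)) by ring; apply Rmult_le_compat_l; [apply pow2_ge_0|lra]).
    replace ((-y)^2) with (y^2) in H0 by ring. lra.
Qed.

Lemma sin_abs (y : R) : Rabs y <= 1 -> Rabs (sin y) <= Rabs y.
Proof.
  intro H. destruct (Rle_dec 0 y).
  - rewrite (Rabs_right y) in * by lra. destruct (sin_bnds y) as [A B]; [lra|].
    assert (y^3 <= y * 1) by (replace (y^3) with (y*y^2) by ring; apply Rmult_le_compat_l; [lra|];
      replace 1 with (1^2) by ring; apply pow_incr; lra).
    rewrite (Rabs_right (sin y)); lra.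
  - rewrite (Rabs_left y) in * by lra. destruct (sin_bnds (-y)) as [A B]; [lra|].
    rewrite sin_neg in A, B.
    assert ((-y)^3 <= (-y) * 1) by (replace ((-y)^3) with ((-y)*(-y)^2) by ring; apply Rmult_le_compat_l; [lra|];
      replace 1 with (1^2) by ring; apply pow_incr; lra).
    rewrite (Rabs_left1 (sin y)); lra.
Qed.

Lemma cos_taylor (y : R) : Rabs y <= 1 -> Rabs (cos y - 1) <= y^2 / 2.
Proof.
  intro H. apply Rabs_le_between in H.
  destruct (pre_cos_bound y 0) as [H1 H2]; try lra.
  unfold cos_approx in H1. simpl in H1. unfold cos_term in H1. simpl in H1.
  field_simplify in H1. pose proof (COS_bound y).
  rewrite Rabs_left1 by lra. lra.
Qed.

Open Scope C_scope.

Lemma Cmod_le_sum (v : C) : (Cmod v <= Rabs (Re v) + Rabs (Im v))%R.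
Proof.
  apply Rsqr_incr_0; [| apply Cmod_ge_0 | pose proof (Rabs_pos (Re v)); pose proof (Rabs_pos (Im v)); lra].
  unfold Rsqr. pose proof (Cmod2_alt v). simpl in H. rewrite !Rmult_1_r in H. rewrite H.
  pose proof (pow2_abs (Re v)); pose proof (pow2_abs (Im v)). simpl in *.
  pose proof (Rabs_pos (Re v)); pose proof (Rabs_pos (Im v)). nra.
Qed.

Lemma Re_le_Cmod (v : C) : (Rabs (Re v) <= Cmod v)%R.
Proof. pose proof (Rmax_Cmod v). unfold Re. pose proof (Rmax_l (Rabs (fst v)) (Rabs (snd v))). lra. Qed.
Lemma Im_le_Cmod (v : C) : (Rabs (Im v) <= Cmod v)%R.
Proof. pose proof (Rmax_Cmod v). unfold Im. pose proof (Rmax_r (Rabs (fst v)) (Rabs (snd v))). lra. Qed.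

Lemma cexp_taylor (w : C) : (Cmod w <= /2)%R -> (Cmod (cexp w - 1 - w) <= 3 * Cmod w ^ 2)%R.
Proof.
  intro H. pose proof (Re_le_Cmod w). pose proof (Im_le_Cmod w).
  pose proof (Cmod2_alt w) as Hm.
  destruct w as [x y]. unfold Re, Im in *; simpl fst in *; simpl snd in *.
  eapply Rle_trans; [apply Cmod_le_sum|].
  unfold cexp, Re, Im; simpl.
  set (e := exp x). set (c := cos y). set (s := sin y).
  assert (Hx : (Rabs x <= /2)%R) by lra. assert (Hy: (Rabs y <= 1)%R) by lra.
  pose proof (exp_taylor1 x Hx) as E1. pose proof (exp_taylor0 x Hx) as E0.
  pose proof (sin_taylor y Hy) as S1. pose proof (sin_abs y Hy) as S0.
  pose proof (cos_taylor y Hy) as C1. pose proof (COS_bound y) as CB.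
  fold e c s in E1, E0, S1, S0, C1, CB.
  assert (A1 : (Rabs (e * c - 1 - x) <= 2 * x^2 + y^2)%R).
  { replace (e * c - 1 - x)%R with ((e - 1 - x) * c + (1 + x) * (c - 1))%R by ring.
    eapply Rle_trans; [apply Rabs_triang|]. rewrite !Rabs_mult.
    assert (Rabs c <= 1)%R by (apply Rabs_le; lra).
    assert (Rabs (1 + x) <= 3/2)%R by (apply Rabs_le; apply Rabs_le_between in Hx; lra).
    pose proof (Rabs_pos (e - 1 - x)). pose proof (Rabs_pos (c - 1)). pose proof (Rabs_pos c).
    pose proof (Rabs_pos (1+x)). pose proof (pow2_ge_0 x).
    assert (Rabs (e - 1 - x) * Rabs c <= 2 * x^2 * 1)%R by (apply Rmult_le_compat; lra).
    assert (Rabs (1 + x) * Rabs (c - 1) <= 3/2 * (y^2/2))%R by (apply Rmult_le_compat; lra).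
    nra. }
  assert (A2 : (Rabs (e * s - y) <= x^2 + 2 * y^2)%R).
  { replace (e * s - y)%R with ((e - 1) * s + (s - y))%R by ring.
    eapply Rle_trans; [apply Rabs_triang|]. rewrite !Rabs_mult.
    pose proof (Rabs_pos (e - 1)). pose proof (Rabs_pos s).
    assert (Rabs (e - 1) * Rabs s <= 2 * Rabs x * Rabs y)%R by (apply Rmult_le_compat; lra).
    assert (2 * Rabs x * Rabs y <= x^2 + y^2)%R.
    { rewrite <- (pow2_abs x), <- (pow2_abs y). pose proof (pow2_ge_0 (Rabs x - Rabs y)). nra. }
    lra. }
  unfold Cminus, Cplus, Copp; simpl.
  assert (Q : (Cmod (x,y) * (Cmod (x,y) * 1) = x^2 + y^2)%R) by (simpl in Hm; simpl; lra).
  rewrite Q.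
  replace (e * c + - (1) + - x)%R with (e * c - 1 - x)%R by ring.
  replace (e * s + - 0 + - y)%R with (e * s - y)%R by ring. lra.
Qed.

Open Scope C_scope.

Open Scope C_scope.

Definition Ccv (u : nat -> C) (l : C) :=
  forall eps : R, (0 < eps)%R -> exists N, forall n, (N <= n)%nat -> (Cmod (u n - l) < eps)%R.

Lemma Ccv_filterlim u l : Ccv u l -> filterlim u eventually (locally l).
Proof.
  intro H. apply filterlim_locally. intros eps. destruct (H eps (cond_pos eps)) as [N HN].
  exists N. intros n Hn. apply (@norm_compat1 C_AbsRing C_NormedModule). apply HN, Hn.
Qed.

Lemma filterlim_Ccv u l : filterlim u eventually (locally l) -> Ccv u l.
Proof.
  intros H eps Heps.
  pose proof (@norm_factor_gt_0 C_AbsRing C_NormedModule) as Hf.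
  assert (He : (0 < eps / (@norm_factor C_AbsRing C_NormedModule))%R).
  { apply Rdiv_lt_0_compat; lra. }
  pose proof (proj1 (@filterlim_locally _ _ _ _ u l) H (mkposreal _ He)) as H1.
  destruct H1 as [N HN]. exists N. intros n Hn.
  pose proof (@norm_compat2 C_AbsRing C_NormedModule l (u n) (mkposreal _ He) (HN n Hn)) as H2.
  simpl in H2. replace (norm_factor * (eps / norm_factor))%R with eps in H2 by (field; lra).
  exact H2.
Qed.

Lemma lim_unique (u : nat -> C) (l l' : C) : filterlim u eventually (locally l) -> filterlim u eventually (locally l') -> l = l'.
Proof. intros H1 H2. apply (@filterlim_locally_unique nat C_AbsRing C_NormedModule eventually _ u l l' H1 H2). Qed.

Lemma lim_plus (u v : nat -> C) (a b : C) : filterlim u eventually (locally a) -> filterlim v eventually (locally b) ->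
  filterlim (fun n => u n + v n) eventually (locally (a + b)).
Proof.
  intros Hu Hv. apply Ccv_filterlim. intros eps Heps.
  destruct (filterlim_Ccv _ _ Hu (eps/2)%R) as [N1 H1]; [lra|].
  destruct (filterlim_Ccv _ _ Hv (eps/2)%R) as [N2 H2]; [lra|].
  exists (max N1 N2). intros n Hn.
  replace (u n + v n - (a + b)) with ((u n - a) + (v n - b)) by ring.
  eapply Rle_lt_trans; [apply Cmod_triangle|].
  specialize (H1 n ltac:(lia)). specialize (H2 n ltac:(lia)). lra.
Qed.

Lemma lim_mult (u v : nat -> C) (a b : C) : filterlim u eventually (locally a) -> filterlim v eventually (locally b) ->
  filterlim (fun n => u n * v n) eventually (locally (a * b)).
Proof.
  intros Hu Hv. apply Ccv_filterlim. intros eps Heps.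
  set (A := (Cmod a + 1)%R). set (B := (Cmod b + 1)%R).
  assert (HA : (0 < A)%R) by (unfold A; pose proof (Cmod_ge_0 a); lra).
  assert (HB : (0 < B)%R) by (unfold B; pose proof (Cmod_ge_0 b); lra).
  set (d := Rmin 1 (eps / (2 * (A + B)))).
  assert (Hd : (0 < d)%R) by (unfold d; apply Rmin_pos; [lra| apply Rdiv_lt_0_compat; lra]).
  destruct (filterlim_Ccv _ _ Hu d Hd) as [N1 H1].
  destruct (filterlim_Ccv _ _ Hv d Hd) as [N2 H2].
  exists (max N1 N2). intros n Hn.
  specialize (H1 n ltac:(lia)). specialize (H2 n ltac:(lia)).
  replace (u n * v n - a * b) with (u n * (v n - b) + b * (u n - a)) by ring.
  eapply Rle_lt_trans; [apply Cmod_triangle|]. rewrite !Cmod_mult.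
  assert (Hun : (Cmod (u n) <= A)%R).
  { replace (u n) with (a + (u n - a)) by ring. eapply Rle_trans; [apply Cmod_triangle|].
    unfold A. assert (d <= 1)%R by apply Rmin_l. lra. }
  assert (Hd2 : (d * (A + B) <= eps / 2)%R).
  { unfold d. assert (Rmin 1 (eps / (2 * (A + B))) <= eps / (2 * (A + B)))%R by apply Rmin_r.
    apply Rmult_le_compat_r with (r := (A + B)%R) in H; [|lra].
    replace (eps / (2 * (A + B)) * (A + B))%R with (eps / 2)%R in H by (field; lra). exact H. }
  pose proof (Cmod_ge_0 (u n)). pose proof (Cmod_ge_0 (v n - b)). pose proof (Cmod_ge_0 (u n - a)).
  assert (Cmod (u n) * Cmod (v n - b) <= A * d)%R by (apply Rmult_le_compat; lra).
  assert (Cmod b * Cmod (u n - a) <= B * d)%R by (pose proof (Cmod_ge_0 b); apply Rmult_le_compat; unfold B; lra).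
  nra.
Qed.

Lemma lim_const (c : C) : filterlim (fun _ : nat => c) eventually (locally c).
Proof. apply filterlim_const. Qed.

Lemma lim_ext (u v : nat -> C) (l : C) : (exists N, forall n, (N <= n)%nat -> u n = v n) ->
  filterlim u eventually (locally l) -> filterlim v eventually (locally l).
Proof.
  intros [N HN] H. apply Ccv_filterlim. intros eps Heps.
  destruct (filterlim_Ccv u l H eps Heps) as [M HM]. exists (max N M). intros n Hn.
  rewrite <- HN by lia. apply HM; lia.
Qed.

Lemma lim_shift (u : nat -> C) (l : C) J : filterlim (fun n => u (n + J)%nat) eventually (locally l) ->
  filterlim u eventually (locally l).
Proof.
  intros H. apply Ccv_filterlim. intros eps Heps.
  destruct (filterlim_Ccv _ l H eps Heps) as [M HM]. exists (M + J)%nat. intros n Hn.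
  replace n with ((n - J) + J)%nat by lia. apply HM; lia.
Qed.

Lemma lim_RtoC (u : nat -> R) (l : R) : is_lim_seq u l ->
  filterlim (fun n => RtoC (u n)) eventually (locally (RtoC l)).
Proof.
  intro H. apply Ccv_filterlim. intros eps Heps.
  apply is_lim_seq_spec in H. destruct (H (mkposreal eps Heps)) as [N HN].
  exists N. intros n Hn. rewrite <- RtoC_minus, Cmod_R. apply HN. lia.
Qed.

Lemma lim_bound (u : nat -> C) (l : C) B : filterlim u eventually (locally l) ->
  (exists N, forall n, (N <= n)%nat -> (Cmod (u n) <= B)%R) -> (Cmod l <= B)%R.
Proof.
  intros H [N HN]. apply Rnot_lt_le. intro Hlt.
  destruct (filterlim_Ccv u l H (Cmod l - B)%R) as [M HM]; [lra|].
  specialize (HM (max N M) ltac:(lia)). specialize (HN (max N M) ltac:(lia)).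
  assert (Cmod l <= Cmod (u (max N M)) + Cmod (l - u (max N M)))%R.
  { replace l with (u (max N M) + (l - u (max N M))) at 1 by ring. apply Cmod_triangle. }
  rewrite <- Cmod_opp in HM. replace (- (u (max N M) - l)) with (l - u (max N M)) in HM by ring.
  lra.
Qed.

Open Scope C_scope.

Open Scope C_scope.

Fixpoint rsum (f : nat -> R) (n : nat) : R :=
  match n with O => 0%R | S m => (rsum f m + f m)%R end.

Lemma csum_ext_lt (f g : nat -> C) n : (forall k, (k < n)%nat -> f k = g k) -> csum f n = csum g n.
Proof. induction n; simpl; intros; auto. rewrite IHn, H; auto. Qed.
Lemma cprod_ext_lt (f g : nat -> C) n : (forall k, (k < n)%nat -> f k = g k) -> cprod f n = cprod g n.
Proof. induction n; simpl; intros; auto. rewrite IHn, H; auto. Qed.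
Lemma rsum_ext_lt (f g : nat -> R) n : (forall k, (k < n)%nat -> f k = g k) -> rsum f n = rsum g n.
Proof. induction n; simpl; intros; auto. rewrite IHn, H; auto. Qed.

Lemma csum_first (f : nat -> C) n : csum f (S n) = f O + csum (fun k => f (S k)) n.
Proof. induction n; simpl in *. ring. rewrite IHn. ring. Qed.
Lemma cprod_first (f : nat -> C) n : cprod f (S n) = f O * cprod (fun k => f (S k)) n.
Proof. induction n; simpl in *. ring. rewrite IHn. ring. Qed.

Lemma csum_scal c (f : nat -> C) n : csum (fun k => c * f k) n = c * csum f n.
Proof. induction n; simpl. ring. rewrite IHn; ring. Qed.
Lemma csum_plus (f g : nat -> C) n : csum (fun k => f k + g k) n = csum f n + csum g n.
Proof. induction n; simpl. ring. rewrite IHn; ring. Qed.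
Lemma csum_minus (f g : nat -> C) n : csum (fun k => f k - g k) n = csum f n - csum g n.
Proof. induction n; simpl. ring. rewrite IHn; ring. Qed.
Lemma cprod_mult (f g : nat -> C) n : cprod (fun k => f k * g k) n = cprod f n * cprod g n.
Proof. induction n; simpl. ring. rewrite IHn; ring. Qed.

Lemma cprod_neq0 (f : nat -> C) n : (forall k, (k < n)%nat -> f k <> 0) -> cprod f n <> 0.
Proof. induction n; simpl; intros H. apply C1_nz. apply Cmult_neq_0. apply IHn; intros; apply H; lia. apply H; lia. Qed.

Lemma cprod_inv (f : nat -> C) n : (forall k, (k < n)%nat -> f k <> 0) -> cprod (fun k => / f k) n = / cprod f n.
Proof.
  induction n; simpl; intros H. { field; try apply C1_nz. }
  rewrite IHn by (intros; apply H; lia). field. split. apply H; lia. apply cprod_neq0; intros; apply H; lia.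
Qed.

Lemma csum_RtoC (f : nat -> R) n : csum (fun k => RtoC (f k)) n = RtoC (rsum f n).
Proof. induction n; simpl. reflexivity. rewrite IHn, RtoC_plus. reflexivity. Qed.

Lemma cexp_csum (f : nat -> C) n : cexp (csum f n) = cprod (fun k => cexp (f k)) n.
Proof. induction n; simpl. apply cexp_0. rewrite cexp_plus, IHn. reflexivity. Qed.

Lemma cprod_shift (a : nat -> C) J n : cprod a (n + J) = cprod a J * cprod (fun j => a (j + J)%nat) n.
Proof. induction n; simpl. ring. rewrite IHn. ring. Qed.

Lemma csum_reflect (f : nat -> C) n : csum (fun j => f (n - j)%nat) (S n) = csum f (S n).
Proof.
  induction n. simpl. reflexivity.
  rewrite csum_first. replace (S n - 0)%nat with (S n) by lia.
  rewrite (csum_ext_lt _ (fun j => f (n - j)%nat)) by (intros; f_equal; lia).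
  rewrite IHn. change (csum f (S (S n))) with (csum f (S n) + f (S n)). ring.
Qed.

Lemma rsum_nonneg (f : nat -> R) n : (forall k, 0 <= f k)%R -> (0 <= rsum f n)%R.
Proof. induction n; simpl; intros H; [lra|]. specialize (IHn H). specialize (H n). lra. Qed.
Lemma rsum_le (f g : nat -> R) n : (forall k, (k < n)%nat -> f k <= g k)%R -> (rsum f n <= rsum g n)%R.
Proof. induction n; simpl; intros; [lra|]. pose proof (H n ltac:(lia)). pose proof (IHn ltac:(intros; apply H; lia)). lra. Qed.

Lemma cprod_bound (a : nat -> C) n : (Cmod (cprod a n) <= exp (rsum (fun j => Cmod (a j - 1)) n))%R
  /\ (Cmod (cprod a n - 1) <= exp (rsum (fun j => Cmod (a j - 1)) n) - 1)%R.
Proof.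
  induction n; simpl.
  - rewrite exp_0. replace (1 - 1) with (RtoC 0) by ring. rewrite Cmod_0, Cmod_1. lra.
  - destruct IHn as [H1 H2]. set (S0 := rsum (fun j : nat => Cmod (a j - 1)) n) in *.
    set (e := Cmod (a n - 1)). rewrite exp_plus.
    pose proof (exp_ineq1_le e). pose proof (Cmod_ge_0 (a n - 1)). fold e in H0.
    pose proof (exp_pos S0). pose proof (exp_pos e).
    assert (Ha : (Cmod (a n) <= 1 + e)%R).
    { replace (a n) with (1 + (a n - 1)) by ring. eapply Rle_trans; [apply Cmod_triangle|]. rewrite Cmod_1. unfold e; lra. }
    split.
    + rewrite Cmod_mult. pose proof (Cmod_ge_0 (cprod a n)). pose proof (Cmod_ge_0 (a n)).
      apply Rmult_le_compat; lra.
    + replace (cprod a n * a n - 1) with ((cprod a n - 1) * a n + (a n - 1)) by ring.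
      eapply Rle_trans; [apply Cmod_triangle|]. rewrite Cmod_mult.
      pose proof (Cmod_ge_0 (cprod a n - 1)). pose proof (Cmod_ge_0 (a n)).
      assert (Cmod (cprod a n - 1) * Cmod (a n) <= (exp S0 - 1) * exp e)%R
        by (apply Rmult_le_compat; lra).
      fold e. nra.
Qed.

Lemma cprod_S (f : nat -> C) n : cprod f (S n) = cprod f n * f n.
Proof. reflexivity. Qed.
Lemma csum_S (f : nat -> C) n : csum f (S n) = csum f n + f n.
Proof. reflexivity. Qed.
Lemma rsum_S (f : nat -> R) n : rsum f (S n) = (rsum f n + f n)%R.
Proof. reflexivity. Qed.

Open Scope C_scope.

Open Scope C_scope.

Definition tel (j : nat) : R := (/ INR (j + 1) - / INR (j + 2))%R.

Lemma INR_pos_S j : (0 < INR (j + 1))%R.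
Proof. rewrite plus_INR. simpl. pose proof (pos_INR j). lra. Qed.

Lemma tel_pos j : (0 <= tel j)%R.
Proof.
  unfold tel. rewrite !plus_INR. simpl. pose proof (pos_INR j).
  assert (/ (INR j + (1 + 1)) <= / (INR j + 1))%R by (apply Rinv_le_contravar; lra). lra.
Qed.

Lemma rsum_tel n : rsum tel n = (1 - / INR (n + 1))%R.
Proof.
  induction n. simpl. field.
  simpl rsum. rewrite IHn. unfold tel. replace (n + 2)%nat with (S n + 1)%nat by lia. ring.
Qed.

Lemma rsum_tel_le n : (rsum tel n <= 1)%R.
Proof. rewrite rsum_tel. pose proof (INR_pos_S n). pose proof (Rinv_0_lt_compat _ H). lra. Qed.

Lemma sum_f_tel N : sum_f_R0 tel N = (1 - / INR (N + 2))%R.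
Proof.
  induction N. unfold tel; simpl. field.
  simpl sum_f_R0. rewrite IHN. unfold tel. replace (S N + 1)%nat with (N + 2)%nat by lia.
  replace (S N + 2)%nat with (N + 3)%nat by lia. ring.
Qed.

Lemma inv_INR_small (eps : R) : (0 < eps)%R -> exists N, forall n, (N <= n)%nat -> (/ INR (n + 1) < eps)%R.
Proof.
  intros He. destruct (archimed (/ eps)) as [H1 _].
  assert (0 <= IZR (up (/ eps)))%R by (pose proof (Rinv_0_lt_compat _ He); lra).
  exists (Z.to_nat (up (/ eps))). intros n Hn.
  assert (INR (Z.to_nat (up (/eps))) = IZR (up (/eps))) as E.
  { rewrite INR_IZR_INZ. f_equal. rewrite Z2Nat.id; auto. apply le_IZR; auto. }
  apply le_INR in Hn. rewrite E in Hn.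
  assert (/ eps < INR (n + 1))%R by (rewrite plus_INR; simpl; lra).
  rewrite <- (Rinv_inv eps). apply Rinv_lt_contravar; auto.
  apply Rmult_lt_0_compat. apply Rinv_0_lt_compat; auto. apply INR_pos_S.
Qed.

Lemma ex_series_tel : ex_series tel.
Proof.
  apply ex_series_Reals_1. exists 1%R. intros eps He.
  destruct (inv_INR_small eps He) as [N HN]. exists N. intros n Hn.
  rewrite sum_f_tel. unfold R_dist.
  specialize (HN (S n) ltac:(lia)). replace (S n + 1)%nat with (n + 2)%nat in HN by lia.
  assert (0 < / INR (n + 2))%R. { apply Rinv_0_lt_compat. replace (n+2)%nat with (S n + 1)%nat by lia. apply INR_pos_S. }
  rewrite Rabs_left1 by lra. lra.
Qed.

Lemma exp_mono x y : (x <= y)%R -> (exp x <= exp y)%R.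
Proof. intros [H|H]. left; apply exp_increasing; auto. subst; lra. Qed.

Lemma rsum_scal c (f : nat -> R) n : rsum (fun j => c * f j)%R n = (c * rsum f n)%R.
Proof. induction n; simpl. ring. rewrite IHn. ring. Qed.

Lemma prod_conv (a : nat -> C) (E : R) : (0 <= E)%R ->
  (forall j, (Cmod (a j - 1) <= E * tel j)%R) ->
  exists l, filterlim (cprod a) eventually (locally l).
Proof.
  intros HE Ha.
  set (d := fun n => cprod a (S n) - cprod a n).
  set (b := fun n => (tel n * (exp E * E))%R).
  assert (Hd0 : forall n, (Cmod (d n) <= b n)%R).
  { intro n. unfold d, b. simpl. replace (cprod a n * a n - cprod a n) with (cprod a n * (a n - 1)) by ring.
    rewrite Cmod_mult. destruct (cprod_bound a n) as [B1 _].
    assert (rsum (fun j => Cmod (a j - 1)) n <= E)%R.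
    { eapply Rle_trans. apply (rsum_le _ (fun j => E * tel j)%R). intros; apply Ha.
      rewrite rsum_scal. pose proof (rsum_tel_le n). nra. }
    pose proof (exp_mono _ _ H). pose proof (Cmod_ge_0 (cprod a n)). pose proof (Cmod_ge_0 (a n - 1)).
    pose proof (Ha n). pose proof (tel_pos n). pose proof (exp_pos E).
    replace (tel n * (exp E * E))%R with (exp E * (E * tel n))%R by ring.
    apply Rmult_le_compat; lra. }
  assert (Hd : forall n, (@norm C_AbsRing C_CompleteNormedModule (d n) <= b n)%R) by (intro n; exact (Hd0 n)).
  assert (Hs : ex_series b) by (apply ex_series_scal_r, ex_series_tel).
  destruct (@ex_series_le C_AbsRing C_CompleteNormedModule d b Hd Hs) as [L HL].
  exists (L + 1). apply (lim_shift _ _ 1).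
  assert (Hsum : forall n, sum_n d n = cprod a (S n) - 1).
  { induction n. rewrite sum_O. unfold d. simpl. ring.
    rewrite sum_Sn, IHn. unfold d. change (plus (cprod a (S n) - 1) (cprod a (S (S n)) - cprod a (S n)) = cprod a (S (S n)) - 1).
    unfold plus; simpl. ring. }
  apply (lim_ext (fun n => (cprod a (S n) - 1) + 1)).
  { exists O. intros. replace (n + 1)%nat with (S n) by lia. ring. }
  apply lim_plus; [|apply lim_const].
  apply (lim_ext (sum_n d)). { exists O. intros. apply Hsum. }
  exact HL.
Qed.

Lemma prod_conv_nz (a : nat -> C) (E : R) : (0 <= E)%R ->
  (forall j, (Cmod (a j - 1) <= E * tel j)%R) ->
  (forall j, (Cmod (/ a j - 1) <= E * tel j)%R) ->
  (forall j, a j <> 0) ->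
  exists l : C, l <> 0 /\ filterlim (cprod a) eventually (locally l).
Proof.
  intros HE H1 H2 Hnz.
  destruct (prod_conv a E HE H1) as [l Hl].
  destruct (prod_conv (fun j => / a j) E HE H2) as [l' Hl'].
  exists l. split; auto. intro Hz.
  pose proof (lim_mult _ _ _ _ Hl Hl') as Hm.
  assert (E1 : forall n, cprod a n * cprod (fun j => / a j) n = 1).
  { intro n. rewrite <- cprod_mult. induction n; simpl. reflexivity. rewrite IHn. rewrite Cinv_r; auto. ring. }
  assert (filterlim (fun n => cprod a n * cprod (fun j => / a j) n) eventually (locally (RtoC 1))).
  { apply (lim_ext (fun _ => RtoC 1)). exists O; intros; rewrite E1; auto. apply lim_const. }
  pose proof (lim_unique _ _ _ Hm H). rewrite Hz in H0. rewrite Cmult_0_l in H0. apply C1_nz. auto.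
Qed.

Lemma prod_shift_lim (a : nat -> C) J l : filterlim (cprod (fun j => a (j + J)%nat)) eventually (locally l) ->
  filterlim (cprod a) eventually (locally (cprod a J * l)).
Proof.
  intro H. apply (lim_shift _ _ J).
  apply (lim_ext (fun n => cprod a J * cprod (fun j => a (j + J)%nat) n)).
  { exists O. intros. rewrite cprod_shift. reflexivity. }
  apply lim_mult; auto. apply lim_const.
Qed.

Open Scope R_scope.
Lemma nat_large (M : R) : exists N, forall n, (N <= n)%nat -> M < INR n.
Proof.
  destruct (archimed (Rmax M 0)) as [H1 _].
  assert (0 <= IZR (up (Rmax M 0))) by (pose proof (Rmax_r M 0); lra).
  exists (S (Z.to_nat (up (Rmax M 0)))). intros n Hn.
  assert (INR (Z.to_nat (up (Rmax M 0))) = IZR (up (Rmax M 0))) as E.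
  { rewrite INR_IZR_INZ. f_equal. rewrite Z2Nat.id; auto. apply le_IZR; auto. }
  apply le_INR in Hn. rewrite S_INR, E in Hn. pose proof (Rmax_l M 0). lra.
Qed.

Lemma ln_le_x x : -1 < x -> ln (1 + x) <= x.
Proof.
  intro H. apply Rnot_lt_le. intro H'. apply exp_increasing in H'.
  rewrite exp_ln in H' by lra. pose proof (exp_ineq1_le x). lra.
Qed.

Lemma ln_minus a b : 0 < a -> 0 < b -> ln a - ln b = ln (a / b).
Proof. intros. unfold Rdiv. rewrite ln_mult; [rewrite ln_Rinv; [ring|auto]|auto|apply Rinv_0_lt_compat; auto]. Qed.

Lemma ln_bounds t : 0 < t -> t / (1 + t) <= ln (1 + t) <= t.
Proof.
  intro H. split.
  - pose proof (ln_le_x (- (t / (1 + t)))).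
    assert (- (t / (1 + t)) > -1).
    { assert (t / (1+t) < 1). { apply (Rmult_lt_reg_r (1+t)); [lra|]; unfold Rdiv; rewrite Rmult_assoc, Rinv_l by lra; lra. }
      lra. }
    specialize (H0 H1). replace (1 + - (t / (1 + t))) with (/ (1 + t)) in H0 by (field; lra).
    rewrite ln_Rinv in H0 by lra. lra.
  - apply ln_le_x. lra.
Qed.
Open Scope C_scope.

Lemma ratio_lim (a b : C) : filterlim (fun m => (RtoC (INR m) + a) / (RtoC (INR m) + b)) eventually (locally (RtoC 1)).
Proof.
  apply Ccv_filterlim. intros eps He.
  destruct (nat_large (2 * Cmod b + 2 * Cmod (a - b) / eps + 1)) as [N HN].
  exists N. intros n Hn. specialize (HN n Hn).
  pose proof (Cmod_ge_0 b). pose proof (Cmod_ge_0 (a - b)).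
  assert (0 <= 2 * Cmod (a - b) / eps)%R by (apply Rmult_le_pos; [lra| left; apply Rinv_0_lt_compat; lra]).
  assert (Hnb : (INR n / 2 <= Cmod (RtoC (INR n) + b))%R).
  { assert (Cmod (RtoC (INR n)) <= Cmod (RtoC (INR n) + b) + Cmod (- b))%R.
    { replace (RtoC (INR n)) with ((RtoC (INR n) + b) + - b) at 1 by ring. apply Cmod_triangle. }
    rewrite Cmod_opp, Cmod_R, Rabs_right in H2 by (apply Rle_ge, pos_INR). lra. }
  assert (Hnz : RtoC (INR n) + b <> 0).
  { intro Hz. rewrite Hz, Cmod_0 in Hnb. lra. }
  replace ((RtoC (INR n) + a) / (RtoC (INR n) + b) - 1) with ((a - b) / (RtoC (INR n) + b)) by (field; auto).
  rewrite Cmod_div by auto.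
  apply (Rle_lt_trans _ (Cmod (a - b) / (INR n / 2))).
  { unfold Rdiv. apply Rmult_le_compat_l; auto. apply Rinv_le_contravar; [lra|auto]. }
  replace (Cmod (a - b) / (INR n / 2))%R with (2 * Cmod (a - b) / INR n)%R by (field; lra).
  apply (Rmult_lt_reg_r (INR n / eps)). apply Rdiv_lt_0_compat; lra.
  replace (2 * Cmod (a - b) / INR n * (INR n / eps))%R with (2 * Cmod (a - b) / eps)%R by (field; lra).
  replace (eps * (INR n / eps))%R with (INR n) by (field; lra). lra.
Qed.

Open Scope C_scope.

Open Scope C_scope.

Definition nonpole (z : C) := forall m : nat, z + RtoC (INR m) <> 0.

Lemma nonpole_of z : not_negint z -> z <> 0 -> nonpole z.
Proof.
  intros H1 H2 m. destruct m. simpl. rewrite Cplus_0_r. auto.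
  intro H. apply (H1 m). replace z with (z + RtoC (INR (S m)) - RtoC (INR (S m))) by ring.
  rewrite H. ring.
Qed.

Lemma nonpole_shift z : nonpole z -> nonpole (z + 1).
Proof. intros H m. replace (z + 1 + RtoC (INR m)) with (z + RtoC (INR (S m))).
  apply H. rewrite S_INR, RtoC_plus. ring. Qed.

Definition uu (z : C) (j : nat) : C :=
  cexp (z * RtoC (ln (INR (j + 2)) - ln (INR (j + 1)))) * RtoC (INR (j + 1)) / (z + RtoC (INR (j + 1))).

Lemma INR_S_pos n : (0 < INR (S n))%R.
Proof. rewrite S_INR. pose proof (pos_INR n). lra. Qed.

Lemma cprod_u_eq z m : nonpole z -> cprod (uu z) m =
  cexp (z * RtoC (ln (INR (S m)))) * RtoC (INR (fact m)) / cprod (fun j => z + RtoC (INR (S j))) m.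
Proof.
  intro Hz. induction m.
  - simpl. rewrite ln_1, Cmult_0_r, cexp_0. field; try apply C1_nz.
  - rewrite !cprod_S. rewrite IHm. unfold uu.
    assert (Hp : cprod (fun j => z + RtoC (INR (S j))) m <> 0) by (apply cprod_neq0; intros; apply Hz).
    assert (Hm : z + RtoC (INR (m + 1)) <> 0) by apply Hz.
    replace (m + 2)%nat with (S (S m)) by lia. replace (m + 1)%nat with (S m) in * by lia.
    rewrite fact_simpl, mult_INR, RtoC_mult.
    replace (cexp (z * RtoC (ln (INR (S (S m))))))
      with (cexp (z * RtoC (ln (INR (S m)))) * cexp (z * RtoC (ln (INR (S (S m))) - ln (INR (S m)))))
      by (rewrite <- cexp_plus; f_equal; rewrite RtoC_minus; ring).
    field. split; auto.
Qed.

Lemma gauss_eq z m : nonpole z -> gauss_seq z (S m) =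
  cprod (uu z) m * (RtoC (INR (S m)) / (z * (z + RtoC (INR (S m))))).
Proof.
  intro Hz. rewrite cprod_u_eq by auto. unfold gauss_seq. rewrite rpowC_cexp.
  rewrite cprod_first, cprod_S. cbv beta. change (INR 0) with 0%R. rewrite Cplus_0_r.
  assert (Hp : cprod (fun j => z + RtoC (INR (S j))) m <> 0) by (apply cprod_neq0; intros; apply Hz).
  assert (Hm : z + RtoC (INR (S m)) <> 0) by apply Hz.
  assert (H0 : z <> 0) by (pose proof (Hz O) as H; simpl in H; rewrite Cplus_0_r in H; auto).
  rewrite fact_simpl, mult_INR, RtoC_mult.
  replace (z * RtoC (ln (INR (S m)))) with (RtoC (ln (INR (S m))) * z) by ring.
  field. repeat split; auto.
Qed.

Lemma tel_alt j : tel j = ((/ INR (j + 1)) ^ 2 / (1 + / INR (j + 1)))%R.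
Proof.
  unfold tel. pose proof (INR_pos_S j). replace (j + 2)%nat with (S (j + 1)) by lia.
  rewrite S_INR. field. lra.
Qed.

Lemma tel_ge j : ((/ INR (j + 1)) ^ 2 <= 2 * tel j)%R.
Proof.
  rewrite tel_alt. pose proof (INR_pos_S j).
  assert (1 <= INR (j + 1))%R by (rewrite plus_INR; simpl; pose proof (pos_INR j); lra).
  set (t := (/ INR (j + 1))%R) in *.
  assert (0 < t <= 1)%R. { split. apply Rinv_0_lt_compat; auto. unfold t. rewrite <- Rinv_1. apply Rinv_le_contravar; lra. }
  unfold Rdiv. apply (Rmult_le_reg_r (1 + t)); [lra|].
  rewrite Rmult_assoc, (Rmult_assoc (t^2)), Rinv_l by lra. nra.
Qed.

Lemma tel_le_inv j : (tel j <= / INR (j + 1))%R.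
Proof. unfold tel. assert (0 < / INR (j + 2))%R. apply Rinv_0_lt_compat. replace (j+2)%nat with (S (j+1)) by lia. apply INR_S_pos. lra. Qed.

Lemma tel_prod j : tel j = (/ (INR (j + 1) * INR (j + 2)))%R.
Proof.
  unfold tel. pose proof (INR_pos_S j). replace (j + 2)%nat with (S (j + 1)) by lia.
  rewrite S_INR. field. lra.
Qed.

Lemma tel_decr j J : (tel (j + J) <= tel j)%R.
Proof.
  rewrite !tel_prod. apply Rinv_le_contravar.
  apply Rmult_lt_0_compat; [apply INR_pos_S|]. replace (j+2)%nat with (S (j+1)) by lia. apply INR_S_pos.
  rewrite !plus_INR. simpl. pose proof (pos_INR j). pose proof (pos_INR J). nra.
Qed.

Definition Kz (z : C) : R := (4 * (3 * Cmod z ^ 2 + Cmod z))%R.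

Lemma Kz_pos z : (0 <= Kz z)%R.
Proof. unfold Kz. pose proof (Cmod_ge_0 z). nra. Qed.

Lemma Cmod_RtoC_pos (x : R) : (0 <= x)%R -> Cmod (RtoC x) = x.
Proof. intro. rewrite Cmod_R, Rabs_right; lra. Qed.

Lemma uu_bound z j : (2 * Cmod z <= INR (j + 1))%R ->
  (Cmod (uu z j - 1) <= Kz z * tel j)%R.
Proof.
  intro Hj. pose proof (INR_pos_S j) as HN.
  set (N := INR (j + 1)) in *. set (t := (/ N)%R).
  assert (Ht : (0 < t)%R) by (apply Rinv_0_lt_compat; auto).
  set (l := (ln (INR (j + 2)) - ln N)%R).
  assert (Hl : l = ln (1 + t)).
  { unfold l. rewrite ln_minus. f_equal. replace (j + 2)%nat with (S (j + 1)) by lia. rewrite S_INR. fold N.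
    unfold t. field. lra. replace (j + 2)%nat with (S (j + 1)) by lia. apply INR_S_pos. auto. }
  destruct (ln_bounds t Ht) as [L1 L2]. rewrite <- Hl in L1, L2.
  assert (Hlt : (0 <= t - l <= t ^ 2)%R).
  { split. lra. assert (t - t / (1 + t) <= t^2)%R.
    { replace (t - t / (1 + t))%R with (t ^ 2 / (1 + t))%R by (field; lra).
      unfold Rdiv. pose proof (pow2_ge_0 t).
      assert (/ (1 + t) <= 1)%R by (rewrite <- Rinv_1; apply Rinv_le_contravar; lra). nra. }
    lra. }
  assert (Hl0 : (0 <= l)%R) by (pose proof (Rdiv_lt_0_compat t (1+t) Ht ltac:(lra)); lra).
  pose proof (Cmod_ge_0 z) as Hz0.
  assert (Hzt : (Cmod z * t <= / 2)%R).
  { unfold t. apply (Rmult_le_reg_r N); auto. rewrite Rmult_assoc, Rinv_l by lra. lra. }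
  assert (Hnz : 1 + z * RtoC t <> 0).
  { intro H. assert (Cmod (RtoC 1) <= Cmod (1 + z * RtoC t) + Cmod (- (z * RtoC t)))%R.
    { replace (RtoC 1) with ((1 + z * RtoC t) + - (z * RtoC t)) at 1 by ring. apply Cmod_triangle. }
    rewrite H, Cmod_0, Cmod_opp, Cmod_mult, !Cmod_RtoC_pos in H0 by lra. lra. }
  assert (Heq : uu z j - 1 = (cexp (z * RtoC l) - 1 - z * RtoC t) / (1 + z * RtoC t)).
  { unfold uu. fold N l.
    assert (RtoC N <> 0) by (intro H; apply RtoC_inj in H; lra).
    replace (RtoC t) with (/ RtoC N) in * by (unfold t; rewrite RtoC_inv; auto; lra).
    assert (z + RtoC N <> 0).
    { intro H1. apply Hnz.
      replace (1 + z * / RtoC N) with ((z + RtoC N) / RtoC N) by (field; auto). rewrite H1. field. auto. }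
    field. split; [auto| rewrite Cplus_comm; auto]. }
  rewrite Heq, Cmod_div by auto.
  assert (Hden : (/ 2 <= Cmod (1 + z * RtoC t))%R).
  { assert (Cmod (RtoC 1) <= Cmod (1 + z * RtoC t) + Cmod (- (z * RtoC t)))%R.
    { replace (RtoC 1) with ((1 + z * RtoC t) + - (z * RtoC t)) at 1 by ring. apply Cmod_triangle. }
    rewrite Cmod_opp, Cmod_mult, !Cmod_RtoC_pos in H by lra. lra. }
  assert (Hnum : (Cmod (cexp (z * RtoC l) - 1 - z * RtoC t) <= (3 * Cmod z ^ 2 + Cmod z) * t ^ 2)%R).
  { replace (cexp (z * RtoC l) - 1 - z * RtoC t) with
      ((cexp (z * RtoC l) - 1 - z * RtoC l) + z * RtoC (l - t)) by (rewrite RtoC_minus; ring).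
    eapply Rle_trans; [apply Cmod_triangle|].
    assert (Hzl : (Cmod (z * RtoC l) <= / 2)%R) by (rewrite Cmod_mult, Cmod_RtoC_pos by lra; nra).
    pose proof (cexp_taylor _ Hzl) as T.
    rewrite Cmod_mult, Cmod_RtoC_pos in T by lra.
    rewrite Cmod_mult, Cmod_R, Rabs_left1 by lra.
    assert ((Cmod z * l) ^ 2 <= Cmod z ^ 2 * t ^ 2)%R.
    { rewrite Rpow_mult_distr. apply Rmult_le_compat_l. apply pow2_ge_0. apply pow_incr. lra. }
    assert (Cmod z * (- (l - t)) <= Cmod z * t^2)%R by (apply Rmult_le_compat_l; lra).
    nra. }
  pose proof (tel_ge j) as Tg. fold N t in Tg.
  pose proof (Cmod_ge_0 (cexp (z * RtoC l) - 1 - z * RtoC t)).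
  unfold Rdiv. apply (Rle_trans _ (((3 * Cmod z ^ 2 + Cmod z) * t ^ 2) * 2)).
  { apply Rmult_le_compat; auto. left; apply Rinv_0_lt_compat; lra.
    rewrite <- (Rinv_inv 2). apply Rinv_le_contravar; lra. }
  unfold Kz. assert (0 <= 3 * Cmod z ^ 2 + Cmod z)%R by nra. nra.
Qed.

Lemma inv_bound (a : C) : (Cmod (a - 1) <= / 2)%R -> a <> 0 /\ (Cmod (/ a - 1) <= 2 * Cmod (a - 1))%R.
Proof.
  intro H.
  assert (Ha : (/ 2 <= Cmod a)%R).
  { assert (Cmod (RtoC 1) <= Cmod a + Cmod (- (a - 1)))%R.
    { replace (RtoC 1) with (a + - (a - 1)) at 1 by ring. apply Cmod_triangle. }
    rewrite Cmod_opp, Cmod_RtoC_pos in H0 by lra. lra. }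
  assert (Hnz : a <> 0) by (intro Hz; rewrite Hz, Cmod_0 in Ha; lra).
  split; auto.
  replace (/ a - 1) with (- (a - 1) / a) by (field; auto).
  rewrite Cmod_div, Cmod_opp by auto. pose proof (Cmod_ge_0 (a - 1)).
  unfold Rdiv. rewrite Rmult_comm. apply Rmult_le_compat_r; auto.
  rewrite <- (Rinv_inv 2). apply Rinv_le_contravar; lra.
Qed.

Lemma uu_neq0 z j : nonpole z -> uu z j <> 0.
Proof.
  intro Hz. unfold uu. pose proof (Hz (j + 1)%nat).
  assert (RtoC (INR (j + 1)) <> 0) by (intro H1; apply RtoC_inj in H1; pose proof (INR_pos_S j); lra).
  pose proof (cexp_neq0 (z * RtoC (ln (INR (j + 2)) - ln (INR (j + 1))))).
  unfold Cdiv. repeat apply Cmult_neq_0; auto.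
  intro H2. apply C1_nz. rewrite <- (Cinv_r _ H), H2. ring.
Qed.

Lemma gamma_lim z : nonpole z -> exists l : C, l <> 0 /\ filterlim (gauss_seq z) eventually (locally l).
Proof.
  intro Hz. set (K := Kz z). pose proof (Kz_pos z) as HK. fold K in HK.
  pose proof (Cmod_ge_0 z) as Hz0.
  destruct (nat_large (2 * Cmod z + 2 * K + 1)) as [J HJ]. specialize (HJ J (le_n _)).
  set (a := fun j => uu z (j + J)).
  assert (HINR : forall j, (INR J <= INR (j + J + 1))%R) by (intro j; apply le_INR; lia).
  assert (B1 : forall j, (Cmod (a j - 1) <= K * tel j)%R).
  { intro j. unfold a. eapply Rle_trans. apply uu_bound. specialize (HINR j). lra.
    replace (j + J + 1)%nat with ((j + J) + 1)%nat by lia.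
    apply Rmult_le_compat_l; auto. apply tel_decr. }
  assert (B1' : forall j, (Cmod (a j - 1) <= / 2)%R).
  { intro j. unfold a. eapply Rle_trans. apply uu_bound. specialize (HINR j). lra.
    eapply Rle_trans. apply Rmult_le_compat_l; auto. apply tel_le_inv.
    specialize (HINR j). pose proof (INR_pos_S (j + J)).
    apply (Rmult_le_reg_r (INR (j + J + 1))); auto. rewrite Rmult_assoc, Rinv_l by lra. fold K. lra. }
  destruct (prod_conv_nz a (2 * K)) as [l1 [Hl1 Hlim1]].
  - lra.
  - intro j. pose proof (B1 j). pose proof (tel_pos j). nra.
  - intro j. destruct (inv_bound (a j) (B1' j)) as [_ H]. pose proof (B1 j). lra.
  - intro j. apply (inv_bound (a j) (B1' j)).
  - pose proof (prod_shift_lim (uu z) J l1 Hlim1) as Hlim2.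
    assert (Hz0' : z <> 0) by (pose proof (Hz O) as H; simpl in H; rewrite Cplus_0_r in H; auto).
    exists (cprod (uu z) J * l1 * (/ z * 1)). split.
    + repeat apply Cmult_neq_0; auto. apply cprod_neq0; intros; apply uu_neq0; auto.
      intro H. apply C1_nz. rewrite <- (Cinv_r _ Hz0'), H. ring. apply C1_nz.
    + apply (lim_shift _ _ 1).
      apply (lim_ext (fun m => cprod (uu z) m * (/ z * ((RtoC (INR m) + 1) / (RtoC (INR m) + (z + 1)))))).
      { exists O. intros n _. replace (n + 1)%nat with (S n) by lia. rewrite gauss_eq by auto.
        f_equal. rewrite S_INR, RtoC_plus.
        assert (Hn1 : z + (RtoC (INR n) + 1) <> 0) by (pose proof (Hz (S n)) as H; rewrite S_INR, RtoC_plus in H; auto).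
        assert (Hn2 : RtoC (INR n) + (z + 1) <> 0) by (intro H; apply Hn1; rewrite <- H; ring).
        assert (Hn3 : RtoC (INR n) + 1 + z <> 0) by (intro H; apply Hn1; rewrite <- H; ring).
        field. repeat split; auto. }
      apply lim_mult; auto. apply lim_mult. apply lim_const. apply ratio_lim.
Qed.

Lemma CGamma_spec z : nonpole z -> CGamma z <> 0 /\ filterlim (gauss_seq z) eventually (locally (CGamma z)).
Proof.
  intro Hz. destruct (gamma_lim z Hz) as [l [Hl Hlim]].
  assert (H : filterlim (gauss_seq z) eventually (locally (CGamma z))).
  { unfold CGamma. apply (ClassicalEpsilon.epsilon_spec (inhabits (RtoC 0))
      (fun l0 : C => filterlim (gauss_seq z) eventually (locally l0))). exists l; auto. }
  split; auto. rewrite (lim_unique _ _ _ H Hlim). auto.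
Qed.

Lemma gauss_FE z M : nonpole z -> (0 < M)%nat -> gauss_seq (z + 1) M =
  gauss_seq z M * (z * ((RtoC (INR M) + 0) / (RtoC (INR M) + (z + 1)))).
Proof.
  intros Hz HM. assert (HMp : (0 < INR M)%R) by (apply lt_0_INR; auto).
  unfold gauss_seq. rewrite !rpowC_cexp.
  replace ((z + 1) * RtoC (ln (INR M))) with (z * RtoC (ln (INR M)) + RtoC (ln (INR M))) by ring.
  rewrite cexp_plus, cexp_RtoC, exp_ln by auto.
  assert (Hz0 : z <> 0) by (pose proof (Hz O) as H; simpl in H; rewrite Cplus_0_r in H; auto).
  assert (E1 : cprod (fun j => z + RtoC (INR j)) (S M) * (z + RtoC (INR (S M))) =
     z * cprod (fun j => z + 1 + RtoC (INR j)) (S M)).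
  { rewrite <- (cprod_S (fun j => z + RtoC (INR j)) (S M)). rewrite cprod_first. cbv beta.
    change (INR 0) with 0%R. rewrite Cplus_0_r. f_equal. apply cprod_ext_lt. intros; rewrite S_INR, RtoC_plus; ring. }
  assert (Hq : cprod (fun j => z + RtoC (INR j)) (S M) <> 0) by (apply cprod_neq0; intros; apply Hz).
  assert (Hm : z + RtoC (INR (S M)) <> 0) by apply Hz.
  set (P := cprod (fun j => z + 1 + RtoC (INR j)) (S M)) in *.
  set (Q := cprod (fun j => z + RtoC (INR j)) (S M)) in *.
  replace P with (Q * (z + RtoC (INR (S M))) / z) by (rewrite E1; field; auto).
  rewrite S_INR, RtoC_plus in *.
  assert (Hm' : RtoC (INR M) + (z + 1) <> 0) by (intro H; apply Hm; rewrite <- H; ring).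
  field. repeat split; auto.
Qed.

Lemma CGamma_FE z : nonpole z -> CGamma (z + 1) = z * CGamma z.
Proof.
  intro Hz. destruct (CGamma_spec z Hz) as [_ H1].
  destruct (CGamma_spec (z + 1) (nonpole_shift z Hz)) as [_ H2].
  apply (lim_unique (gauss_seq (z + 1))); auto.
  replace (z * CGamma z) with (CGamma z * (z * 1)) by ring.
  apply (lim_ext (fun m => gauss_seq z m * (z * ((RtoC (INR m) + 0) / (RtoC (INR m) + (z + 1)))))).
  { exists 1%nat. intros n Hn. rewrite gauss_FE; auto. }
  apply lim_mult; auto. apply lim_mult. apply lim_const. apply ratio_lim.
Qed.

Open Scope C_scope.

Open Scope C_scope.

Lemma Hn_S n : Hn (S n) = Hn n + / RtoC (INR (S n)).
Proof. reflexivity. Qed.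

Lemma gen_id (a : nat -> C) n :
  csum (fun k => Hn (n - 1 - k)%nat * (a k - a (S k))) n =
  Hn n * a O - csum (fun j => a (n - S j)%nat / RtoC (INR (S j))) n.
Proof.
  revert a. induction n; intro a.
  - simpl. unfold Hn. simpl. ring.
  - rewrite csum_first. replace (S n - 1 - 0)%nat with n by lia.
    rewrite (csum_ext_lt _ (fun k => Hn (n - 1 - k)%nat * ((fun i => a (S i)) k - (fun i => a (S i)) (S k))))
      by (intros k Hk; cbv beta; f_equal; f_equal; lia).
    rewrite IHn. rewrite csum_S.
    rewrite (csum_ext_lt (fun j => a (S n - S j)%nat / RtoC (INR (S j))) (fun j => a (S (n - S j)) / RtoC (INR (S j))))
      by (intros j Hj; f_equal; f_equal; lia).
    replace (S n - S n)%nat with O by lia. rewrite Hn_S.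
    assert (RtoC (INR (S n)) <> 0) by (intro H; apply RtoC_inj in H; pose proof (INR_S_pos n); lra).
    field. auto.
Qed.

Lemma INR_S_C n : RtoC (INR (S n)) = RtoC (INR n) + 1.
Proof. rewrite S_INR, RtoC_plus. reflexivity. Qed.

Lemma nonpole_plus1 r : not_negint r -> nonpole (r + 1).
Proof.
  intros H m Hm. apply (H m). replace r with (r + 1 + RtoC (INR m) - RtoC (INR (S m))) by (rewrite INR_S_C; ring).
  rewrite Hm. ring.
Qed.

Lemma nonpole_add z k : nonpole z -> nonpole (z + RtoC (INR k)).
Proof. intros H m. replace (z + RtoC (INR k) + RtoC (INR m)) with (z + RtoC (INR (k + m))) by (rewrite plus_INR, RtoC_plus; ring). apply H. Qed.

Lemma CGamma_nz z : nonpole z -> CGamma z <> 0.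
Proof. intro H. apply (CGamma_spec z H). Qed.

Theorem part1 (n : nat) (r s : C) :
      not_negint r -> not_negint s -> s <> 0 -> not_negint (r - s) ->
      csum (fun k => Hn (n - 1 - k)%nat /
              ((RtoC (INR k) + s) * cbinom (r + RtoC (INR k) + 1) (r - s + 1))) n
      = Hn n / (s * cbinom r s)
        - / (r - s + 1) *
          csum (fun j => / (RtoC (INR (S j)) *
                  cbinom (RtoC (INR (n - S j)) + r) (r - s + 1))) n.
Proof.
  intros Hr Hs Hs0 Hrs.
  assert (Ps : nonpole s) by (apply nonpole_of; auto).
  assert (Pr : nonpole (r + 1)) by (apply nonpole_plus1; auto).
  assert (Prs : nonpole (r - s + 1)) by (apply nonpole_plus1; auto).
  assert (Hc : r - s + 1 <> 0) by (pose proof (Prs O) as H; simpl in H; rewrite Cplus_0_r in H; auto).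
  set (G := CGamma (r - s + 1)).
  assert (HG : G <> 0) by (apply CGamma_nz; auto).
  set (a := fun k : nat => CGamma (s + RtoC (INR k)) / CGamma (r + 1 + RtoC (INR k))).
  assert (F1 : forall k, CGamma (s + RtoC (INR (S k))) = (s + RtoC (INR k)) * CGamma (s + RtoC (INR k))).
  { intro k. rewrite INR_S_C. replace (s + (RtoC (INR k) + 1)) with ((s + RtoC (INR k)) + 1) by ring.
    apply CGamma_FE. apply nonpole_add; auto. }
  assert (F2 : forall k, CGamma (r + 1 + RtoC (INR (S k))) = (r + 1 + RtoC (INR k)) * CGamma (r + 1 + RtoC (INR k))).
  { intro k. rewrite INR_S_C. replace (r + 1 + (RtoC (INR k) + 1)) with ((r + 1 + RtoC (INR k)) + 1) by ring.
    apply CGamma_FE. apply nonpole_add; auto. }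
  assert (F3 : CGamma (r - s + 1 + 1) = (r - s + 1) * G) by (apply CGamma_FE; auto).
  assert (N1 : forall k, CGamma (s + RtoC (INR k)) <> 0) by (intro k; apply CGamma_nz, nonpole_add; auto).
  assert (N2 : forall k, CGamma (r + 1 + RtoC (INR k)) <> 0) by (intro k; apply CGamma_nz, nonpole_add; auto).
  assert (N3 : forall k, s + RtoC (INR k) <> 0) by (intro k; apply Ps).
  assert (N4 : forall k, r + 1 + RtoC (INR k) <> 0) by (intro k; apply Pr).
  assert (EL : forall k, Hn (n - 1 - k)%nat /
              ((RtoC (INR k) + s) * cbinom (r + RtoC (INR k) + 1) (r - s + 1)) = G * (Hn (n - 1 - k)%nat * (a k - a (S k)))).
  { intros k. unfold cbinom.
      replace (r + RtoC (INR k) + 1 + 1) with (r + 1 + RtoC (INR (S k))) by (rewrite INR_S_C; ring).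
      replace (r + RtoC (INR k) + 1 - (r - s + 1) + 1) with (s + RtoC (INR (S k))) by (rewrite INR_S_C; ring).
      rewrite F1, F2, F3. unfold a. rewrite F1, F2.
      specialize (N1 k). specialize (N2 k). specialize (N3 k). specialize (N4 k).
      replace (RtoC (INR k) + s) with (s + RtoC (INR k)) by ring.
      field. repeat split; auto. }
  rewrite (csum_ext_lt _ (fun k => G * (Hn (n - 1 - k)%nat * (a k - a (S k))))) by (intros; apply EL).
  rewrite csum_scal, gen_id.
  assert (ER : forall j, / (RtoC (INR (S j)) * cbinom (RtoC (INR (n - S j)) + r) (r - s + 1))
    = (r - s + 1) * (G * (a (n - S j)%nat / RtoC (INR (S j))))).
  { intros j. unfold cbinom. set (p := (n - S j)%nat).
      replace (RtoC (INR p) + r + 1) with (r + 1 + RtoC (INR p)) by ring.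
      replace (RtoC (INR p) + r - (r - s + 1) + 1) with (s + RtoC (INR p)) by ring.
      rewrite F3. unfold a.
      assert (RtoC (INR (S j)) <> 0) by (intro H; apply RtoC_inj in H; pose proof (INR_S_pos j); lra).
      specialize (N1 p). specialize (N2 p).
      field. repeat split; auto. }
  rewrite (csum_ext_lt (fun j => / (RtoC (INR (S j)) * cbinom (RtoC (INR (n - S j)) + r) (r - s + 1)))
    (fun j => (r - s + 1) * (G * (a (n - S j)%nat / RtoC (INR (S j)))))) by (intros; apply ER).
  rewrite csum_scal, csum_scal.
  assert (E0 : Hn n / (s * cbinom r s) = G * (Hn n * a O)).
  { unfold cbinom, a. change (INR 0) with 0%R. rewrite !Cplus_0_r.
    replace (r - s + 1) with (r - s + 1) by ring. fold G.
    rewrite (CGamma_FE s Ps).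
    assert (CGamma s <> 0) by (pose proof (N1 O) as H; change (INR 0) with 0%R in H; rewrite Cplus_0_r in H; auto).
    assert (CGamma (r + 1) <> 0) by (pose proof (N2 O) as H1; change (INR 0) with 0%R in H1; rewrite Cplus_0_r in H1; exact H1).
    field. repeat split; auto. }
  rewrite E0. field. auto.
Qed.

Open Scope C_scope.

Open Scope R_scope.

Definition cm (x : R) (m : nat) : R := ln (INR m) - rsum (fun j => / (x + INR j)) (S m).

Lemma rsum_telesc (f : nat -> R) n : rsum (fun j => f (S j) - f j) n = f n - f O.
Proof. induction n; simpl. ring. rewrite IHn. ring. Qed.

Lemma ln_le_mono a b : 0 < a -> a <= b -> ln a <= ln b.
Proof. intros Ha [H|H]. left; apply ln_increasing; auto. subst; lra. Qed.

Lemma cm_incr x m : 0 < x -> (1 <= m)%nat -> cm x m <= cm x (S m).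
Proof.
  intros Hx Hm. unfold cm. rewrite (rsum_S _ (S m)).
  assert (Hm0 : 0 < INR m) by (apply lt_0_INR; lia).
  assert (E : ln (INR (S m)) - ln (INR m) = ln (1 + / INR m)).
  { rewrite ln_minus; [| apply INR_S_pos | auto]. f_equal. rewrite S_INR. field. lra. }
  destruct (ln_bounds (/ INR m)) as [L _]. apply Rinv_0_lt_compat; auto.
  replace (/ INR m / (1 + / INR m)) with (/ (INR m + 1)) in L by (field; lra).
  assert (/ (x + INR (S m)) <= / (INR m + 1)).
  { apply Rinv_le_contravar. lra. rewrite S_INR. lra. }
  lra.
Qed.

Lemma cm_ub x m : 0 < x -> (1 <= m)%nat -> cm x m <= ln x.
Proof.
  intros Hx Hm. unfold cm.
  assert (H1 : rsum (fun j => ln (x + INR (S j)) - ln (x + INR j)) (S m) <= rsum (fun j => / (x + INR j)) (S m)).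
  { apply rsum_le. intros k _. pose proof (pos_INR k).
    rewrite ln_minus by (rewrite ?S_INR; lra).
    replace ((x + INR (S k)) / (x + INR k)) with (1 + / (x + INR k)) by (rewrite S_INR; field; lra).
    apply ln_le_x. pose proof (Rinv_0_lt_compat (x + INR k)). lra. }
  rewrite (rsum_telesc (fun j => ln (x + INR j))) in H1. simpl (INR 0) in H1. rewrite Rplus_0_r in H1.
  assert (Hm0 : 0 < INR m) by (apply lt_0_INR; lia).
  assert (ln (INR m) <= ln (x + INR (S m))) by (apply ln_le_mono; auto; rewrite S_INR; lra).
  lra.
Qed.

Lemma cm_cv x : 0 < x -> { c : R | Un_cv (fun m => cm x (S m)) c }.
Proof.
  intro Hx. apply growing_cv.
  - intro n. apply cm_incr; auto; lia.
  - exists (ln x). intros y [n Hn]. subst y. apply cm_ub; auto; lia.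
Qed.

Lemma cm_bounded x : 0 < x -> exists M, 0 <= M /\ forall m, (1 <= m)%nat -> Rabs (cm x m) <= M.
Proof.
  intro Hx. exists (Rabs (cm x 1) + Rabs (ln x)). split.
  pose proof (Rabs_pos (cm x 1)); pose proof (Rabs_pos (ln x)); lra.
  intros m Hm. assert (cm x 1 <= cm x m).
  { induction Hm. lra. eapply Rle_trans. apply IHHm. apply cm_incr; auto. }
  pose proof (cm_ub x m Hx Hm).
  apply Rabs_le. split.
  - pose proof (Rabs_pos (ln x)). pose proof (Rle_abs (- cm x 1)). rewrite Rabs_Ropp in H2. lra.
  - pose proof (Rabs_pos (cm x 1)). pose proof (Rle_abs (ln x)). lra.
Qed.

Lemma cm_diff x m : 0 < x -> cm (x + 1) m - cm x m = / x - / (x + INR (S m)).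
Proof.
  intro Hx. unfold cm.
  assert (forall n, rsum (fun j => / (x + INR j)) (S n) - rsum (fun j => / (x + 1 + INR j)) (S n) = / x - / (x + INR (S n))).
  { induction n. rewrite !rsum_S. change (rsum (fun j => / (x + INR j)) 0) with 0. change (rsum (fun j => / (x + 1 + INR j)) 0) with 0. change (INR 0) with 0. change (INR 1) with 1. rewrite !Rplus_0_r. ring.
    rewrite (rsum_S _ (S n)), (rsum_S (fun j => / (x + 1 + INR j)) (S n)).
    replace (x + 1 + INR (S n)) with (x + INR (S (S n))) by (rewrite (S_INR (S n)); ring). lra. }
  specialize (H m). lra.
Qed.

Lemma expm1_le t : 0 <= t -> exp t - 1 <= t * exp t.
Proof.
  intro H. pose proof (exp_ineq1_le (- t)). rewrite exp_Ropp in H0. pose proof (exp_pos t).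
  assert (1 - t <= / exp t) by lra.
  apply (Rmult_le_compat_r (exp t)) in H2; [|lra]. rewrite Rinv_l in H2 by lra. nra.
Qed.

Open Scope C_scope.

Definition Wf (x : R) (h : C) (j : nat) : C :=
  cexp (h / RtoC (x + INR j)) / (1 + h / RtoC (x + INR j)).

Lemma small_nz (b : C) : (Cmod b <= /2)%R -> 1 + b <> 0 /\ (/2 <= Cmod (1 + b))%R.
Proof.
  intro H. assert (Cmod (RtoC 1) <= Cmod (1 + b) + Cmod (- b))%R.
  { replace (RtoC 1) with ((1 + b) + - b) at 1 by ring. apply Cmod_triangle. }
  rewrite Cmod_opp, Cmod_RtoC_pos in H0 by lra.
  split; [|lra]. intro Hz. rewrite Hz, Cmod_0 in H0. lra.
Qed.

Lemma hb_small x h j : (1 <= x)%R -> (Cmod h <= /2)%R ->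
  (Cmod (h / RtoC (x + INR j)) <= Cmod h / (INR j + 1))%R /\ (Cmod (h / RtoC (x + INR j)) <= /2)%R.
Proof.
  intros Hx Hh. pose proof (pos_INR j). pose proof (Cmod_ge_0 h).
  assert (RtoC (x + INR j) <> 0) by (intro E; apply RtoC_inj in E; lra).
  rewrite Cmod_div, Cmod_RtoC_pos by (auto; lra).
  split.
  - unfold Rdiv. apply Rmult_le_compat_l; auto. apply Rinv_le_contravar; lra.
  - unfold Rdiv. apply (Rle_trans _ (Cmod h * 1)). apply Rmult_le_compat_l; auto.
    rewrite <- Rinv_1. apply Rinv_le_contravar; lra. lra.
Qed.

Lemma gauss_shift_eq x h m : (1 <= x)%R -> (Cmod h <= /2)%R -> (1 <= m)%nat ->
  gauss_seq (RtoC x + h) m = gauss_seq (RtoC x) m * (cexp (h * RtoC (cm x m)) * cprod (Wf x h) (S m)).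
Proof.
  intros Hx Hh Hm. unfold gauss_seq. rewrite !rpowC_cexp.
  assert (Hxj : forall j, RtoC (x + INR j) <> 0).
  { intros j E. apply RtoC_inj in E. pose proof (pos_INR j). lra. }
  assert (Hb : forall j, 1 + h / RtoC (x + INR j) <> 0) by (intro j; apply small_nz, (hb_small x h j Hx Hh)).
  assert (E1 : (RtoC x + h) * RtoC (ln (INR m)) = RtoC x * RtoC (ln (INR m)) +
     (h * RtoC (cm x m) + csum (fun j => h / RtoC (x + INR j)) (S m))).
  { rewrite (csum_ext_lt _ (fun j => h * RtoC (/ (x + INR j)))).
    rewrite csum_scal, csum_RtoC. unfold cm. rewrite RtoC_minus. ring.
    intros k _. rewrite RtoC_inv. reflexivity. intro E. apply (Hxj k). rewrite E. reflexivity. }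
  rewrite E1, !cexp_plus, cexp_csum.
  rewrite (cprod_ext_lt (fun j => RtoC x + h + RtoC (INR j))
     (fun j => (RtoC x + RtoC (INR j)) * (1 + h / RtoC (x + INR j)))).
  2: { intros k _. rewrite RtoC_plus. field. rewrite <- RtoC_plus. auto. }
  rewrite cprod_mult.
  rewrite (cprod_ext_lt (Wf x h) (fun j => cexp (h / RtoC (x + INR j)) * / (1 + h / RtoC (x + INR j)))) by (intros; reflexivity).
  rewrite cprod_mult, cprod_inv by (intros; auto).
  assert (Hp1 : cprod (fun j => RtoC x + RtoC (INR j)) (S m) <> 0).
  { apply cprod_neq0. intros k _. rewrite <- RtoC_plus. auto. }
  assert (Hp2 : cprod (fun j => 1 + h / RtoC (x + INR j)) (S m) <> 0) by (apply cprod_neq0; auto).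
  field. split; auto.
Qed.

Lemma Wf_bound x h j : (1 <= x)%R -> (Cmod h <= /2)%R ->
  (Cmod (Wf x h j - 1) <= 12 * Cmod h ^ 2 * tel j)%R.
Proof.
  intros Hx Hh. destruct (hb_small x h j Hx Hh) as [B1 B2].
  set (b := h / RtoC (x + INR j)) in *.
  destruct (small_nz b B2) as [Hnz Hden].
  unfold Wf. fold b.
  replace (cexp b / (1 + b) - 1) with ((cexp b - 1 - b) / (1 + b)) by (field; auto).
  rewrite Cmod_div by auto. pose proof (cexp_taylor b B2) as T.
  pose proof (Cmod_ge_0 (cexp b - 1 - b)).
  assert (Cmod (cexp b - 1 - b) / Cmod (1 + b) <= 3 * Cmod b ^ 2 * 2)%R.
  { unfold Rdiv. apply Rmult_le_compat; auto. left; apply Rinv_0_lt_compat; lra.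
    rewrite <- (Rinv_inv 2). apply Rinv_le_contravar; lra. }
  pose proof (tel_ge j). rewrite plus_INR in H1. simpl (INR 1) in H1.
  pose proof (pos_INR j). pose proof (Cmod_ge_0 b). pose proof (Cmod_ge_0 h).
  assert (Cmod b ^ 2 <= (Cmod h / (INR j + 1)) ^ 2)%R by (apply pow_incr; lra).
  replace ((Cmod h / (INR j + 1)) ^ 2)%R with (Cmod h ^ 2 * (/ (INR j + 1)) ^ 2)%R in H5 by (field; lra).
  pose proof (pow2_ge_0 (Cmod h)).
  assert (Cmod h ^ 2 * (/ (INR j + 1)) ^ 2 <= Cmod h ^ 2 * (2 * tel j))%R by (apply Rmult_le_compat_l; auto).
  nra.
Qed.

Lemma lim_minus (u v : nat -> C) (a b : C) : filterlim u eventually (locally a) -> filterlim v eventually (locally b) ->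
  filterlim (fun n => u n - v n) eventually (locally (a - b)).
Proof.
  intros Hu Hv. replace (a - b) with (a + (-1) * b) by ring.
  apply (lim_ext (fun n => u n + (-1) * v n)). exists O. intros; ring.
  apply lim_plus; auto. apply lim_mult; auto. apply lim_const.
Qed.

Lemma nonpole_real_shift (x : R) h : (1 <= x)%R -> (Cmod h <= /2)%R -> nonpole (RtoC x + h).
Proof.
  intros Hx Hh m E. assert (H : h = (RtoC x + h + RtoC (INR m)) - RtoC (x + INR m)) by (rewrite RtoC_plus; ring).
  rewrite E in H. replace (0 - RtoC (x + INR m)) with (- RtoC (x + INR m)) in H by ring.
  pose proof (pos_INR m).
  rewrite H, Cmod_opp, Cmod_RtoC_pos in Hh; lra.
Qed.

Lemma gamma_taylor x : (1 <= x)%R -> exists (c K d : R), Un_cv (fun m => cm x (S m)) c /\ (0 < d)%R /\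
  forall h, (Cmod h <= d)%R ->
  (Cmod (CGamma (RtoC x + h) - CGamma (RtoC x) - h * (CGamma (RtoC x) * RtoC c)) <= K * Cmod h ^ 2)%R.
Proof.
  intro Hx.
  destruct (cm_cv x ltac:(lra)) as [c Hc].
  destruct (cm_bounded x ltac:(lra)) as [M [HM0 HM]].
  assert (Px : nonpole (RtoC x)).
  { pose proof (nonpole_real_shift x 0 Hx) as H. rewrite Cmod_0 in H. rewrite Cplus_0_r in H. apply H. lra. }
  destruct (CGamma_spec _ Px) as [_ Hg].
  destruct (filterlim_Ccv _ _ Hg 1%R ltac:(lra)) as [N HN].
  set (G0 := (Cmod (CGamma (RtoC x)) + 1)%R).
  assert (HG : forall m, (N <= m)%nat -> (Cmod (gauss_seq (RtoC x) m) <= G0)%R).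
  { intros m Hm. specialize (HN m Hm). unfold G0.
    replace (gauss_seq (RtoC x) m) with (CGamma (RtoC x) + (gauss_seq (RtoC x) m - CGamma (RtoC x))) by ring.
    eapply Rle_trans. apply Cmod_triangle. lra. }
  set (e3 := exp 3).
  exists c, (G0 * (24 * e3 + 3 * M ^ 2))%R, (Rmin (/2) (/ (2 * M + 2)))%R.
  split; auto. split. { apply Rmin_pos; [lra| apply Rinv_0_lt_compat; lra]. }
  intros h Hh.
  assert (Hh2 : (Cmod h <= /2)%R) by (eapply Rle_trans; [apply Hh| apply Rmin_l]).
  assert (HhM : (Cmod h * M <= /2)%R).
  { assert (Cmod h <= / (2 * M + 2))%R by (eapply Rle_trans; [apply Hh| apply Rmin_r]).
    apply (Rmult_le_compat_r M) in H; auto.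
    eapply Rle_trans. apply H. apply (Rmult_le_reg_l (2 * M + 2)). lra.
    rewrite <- Rmult_assoc, Rinv_r by lra. lra. }
  pose proof (Cmod_ge_0 h) as Hh0.
  destruct (CGamma_spec _ (nonpole_real_shift x h Hx Hh2)) as [_ Hgh].
  assert (Hcm : filterlim (fun m => RtoC (cm x m)) eventually (locally (RtoC c))).
  { apply (lim_shift _ _ 1). apply (lim_ext (fun m => RtoC (cm x (S m)))).
    exists O. intros. replace (n + 1)%nat with (S n) by lia. auto.
    apply lim_RtoC. apply is_lim_seq_Reals. auto. }
  set (s := fun m => gauss_seq (RtoC x + h) m - gauss_seq (RtoC x) m - h * (gauss_seq (RtoC x) m * RtoC (cm x m))).
  assert (Hs : filterlim s eventually (locally (CGamma (RtoC x + h) - CGamma (RtoC x) - h * (CGamma (RtoC x) * RtoC c)))).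
  { unfold s. apply lim_minus. apply lim_minus; auto. apply lim_mult. apply lim_const. apply lim_mult; auto. }
  apply (lim_bound s); auto.
  exists (max 1 N). intros m Hm.
  unfold s. rewrite gauss_shift_eq by (auto; lia).
  set (g := gauss_seq (RtoC x) m). set (w := h * RtoC (cm x m)). set (P := cprod (Wf x h) (S m)).
  replace (g * (cexp w * P) - g - h * (g * RtoC (cm x m))) with (g * (cexp w * (P - 1) + (cexp w - 1 - w))) by (unfold w; ring).
  rewrite Cmod_mult.
  assert (Hw : (Cmod w <= /2)%R).
  { unfold w. rewrite Cmod_mult, Cmod_R. specialize (HM m ltac:(lia)).
    eapply Rle_trans; [| apply HhM]. apply Rmult_le_compat_l; auto. }
  assert (Hew : (Cmod (cexp w) <= 2)%R).
  { rewrite Cmod_cexp. eapply Rle_trans. apply exp_mono. apply (Rle_trans _ (Rabs (Re w))). apply Rle_abs.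
    apply (Re_le_Cmod w). eapply Rle_trans. apply exp_mono. apply Hw. eapply Rle_trans. apply exp_up. lra. lra. }
  assert (HP : (Cmod (P - 1) <= 12 * Cmod h ^ 2 * e3)%R).
  { unfold P. destruct (cprod_bound (Wf x h) (S m)) as [_ B].
    set (S0 := rsum (fun j => Cmod (Wf x h j - 1)) (S m)) in B.
    assert (HS0 : (S0 <= 12 * Cmod h ^ 2)%R).
    { unfold S0. eapply Rle_trans. apply (rsum_le _ (fun j => 12 * Cmod h ^ 2 * tel j)%R).
      intros; apply Wf_bound; auto. rewrite rsum_scal. pose proof (rsum_tel_le (S m)).
      pose proof (pow2_ge_0 (Cmod h)). nra. }
    assert (HS0' : (0 <= S0)%R) by (apply rsum_nonneg; intros; apply Cmod_ge_0).
    assert (H3 : (S0 <= 3)%R) by nra.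
    pose proof (expm1_le S0 HS0'). pose proof (exp_mono _ _ H3). fold e3 in H0.
    pose proof (exp_pos S0). nra. }
  pose proof (cexp_taylor w Hw) as Tw.
  assert (Hw2 : (Cmod w ^ 2 <= Cmod h ^ 2 * M ^ 2)%R).
  { unfold w. rewrite Cmod_mult, Cmod_R. rewrite Rpow_mult_distr. apply Rmult_le_compat_l. apply pow2_ge_0.
    apply pow_incr. split. apply Rabs_pos. apply HM; lia. }
  assert (Hsum : (Cmod (cexp w * (P - 1) + (cexp w - 1 - w)) <= (24 * e3 + 3 * M ^ 2) * Cmod h ^ 2)%R).
  { eapply Rle_trans. apply Cmod_triangle. rewrite Cmod_mult.
    pose proof (Cmod_ge_0 (cexp w)). pose proof (Cmod_ge_0 (P - 1)).
    assert (Cmod (cexp w) * Cmod (P - 1) <= 2 * (12 * Cmod h ^ 2 * e3))%R by (apply Rmult_le_compat; auto).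
    nra. }
  specialize (HG m ltac:(lia)). fold g in HG.
  pose proof (Cmod_ge_0 g). pose proof (Cmod_ge_0 (cexp w * (P - 1) + (cexp w - 1 - w))).
  rewrite Rmult_assoc. apply Rmult_le_compat; auto.
Qed.

Lemma gamma_derive x : (1 <= x)%R -> exists c, Un_cv (fun m => cm x (S m)) c /\
  @is_derive C_AbsRing C_NormedModule CGamma (RtoC x) (CGamma (RtoC x) * RtoC c).
Proof.
  intro Hx. destruct (gamma_taylor x Hx) as [c [K [d [Hc [Hd HT]]]]].
  exists c. split; auto.
  unfold is_derive, filterdiff. split.
  { apply (@is_linear_scal_l C_AbsRing C_NormedModule). }
  intros x' Hx'. apply (@is_filter_lim_locally_unique C_AbsRing (AbsRing_NormedModule C_AbsRing)) in Hx'. subst x'.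
  intros eps.
  set (K1 := (Rabs K + 1)%R).
  assert (HK1 : (0 < K1)%R) by (unfold K1; pose proof (Rabs_pos K); lra).
  set (del := Rmin d (eps / K1)).
  assert (Hdel : (0 < del)%R) by (apply Rmin_pos; auto; apply Rdiv_lt_0_compat; auto; apply cond_pos).
  exists (mkposreal del Hdel). intros y Hy.
  change (Cmod (y - RtoC x) < del)%R in Hy.
  change (Cmod ((CGamma y - CGamma (RtoC x)) - (y - RtoC x) * (CGamma (RtoC x) * RtoC c)) <= eps * Cmod (y - RtoC x))%R.
  set (h := y - RtoC x) in *. replace y with (RtoC x + h) by (unfold h; ring).
  assert (Hh : (Cmod h <= d)%R) by (pose proof (Rmin_l d (eps / K1)); fold del in H; lra).
  eapply Rle_trans. apply HT; auto.
  pose proof (Cmod_ge_0 h).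
  assert (Cmod h <= eps / K1)%R by (pose proof (Rmin_r d (eps / K1)); fold del in H0; lra).
  assert (K * Cmod h ^ 2 <= K1 * Cmod h * Cmod h)%R.
  { unfold K1. pose proof (Rle_abs K). pose proof (pow2_ge_0 (Cmod h)). simpl. nra. }
  assert (K1 * Cmod h <= eps)%R.
  { apply (Rmult_le_compat_l K1) in H0; [|lra]. replace (K1 * (eps / K1))%R with (pos eps) in H0 by (field; lra). lra. }
  nra.
Qed.

Lemma digamma_real x : (1 <= x)%R -> exists c, Un_cv (fun m => cm x (S m)) c /\ digamma (RtoC x) = RtoC c.
Proof.
  intro Hx. destruct (gamma_derive x Hx) as [c [Hc Hd]]. exists c. split; auto.
  assert (Px : nonpole (RtoC x)).
  { pose proof (nonpole_real_shift x 0 Hx) as H. rewrite Cmod_0 in H. rewrite Cplus_0_r in H. apply H. lra. }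
  pose proof (CGamma_nz _ Px) as Hnz.
  unfold digamma, Cderiv.
  pose proof (ClassicalEpsilon.epsilon_spec (inhabits (RtoC 0))
      (fun l : C => @is_derive C_AbsRing C_NormedModule CGamma (RtoC x) l) (ex_intro _ _ Hd)) as He.
  cbv beta in He.
  pose proof (is_C_derive_unique _ _ _ He) as U1. pose proof (is_C_derive_unique _ _ _ Hd) as U2.
  rewrite U1 in U2. rewrite U2. field. auto.
Qed.

Lemma digamma_step x : (1 <= x)%R -> digamma (RtoC (x + 1)) - digamma (RtoC x) = RtoC (/ x).
Proof.
  intro Hx. destruct (digamma_real x Hx) as [c1 [H1 E1]].
  destruct (digamma_real (x + 1) ltac:(lra)) as [c2 [H2 E2]].
  rewrite E1, E2, <- RtoC_minus. f_equal.
  pose proof (CV_minus _ _ _ _ H2 H1) as H3.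
  apply (UL_sequence _ _ _ H3).
  intros eps Heps. destruct (inv_INR_small eps Heps) as [N HN]. exists N. intros n Hn.
  rewrite cm_diff by lra. unfold R_dist.
  pose proof (pos_INR n). pose proof (HN n ltac:(lia)).
  assert (0 < / (x + INR (S (S n))))%R by (apply Rinv_0_lt_compat; rewrite !S_INR; lra).
  assert (/ (x + INR (S (S n))) <= / INR (n + 1))%R.
  { apply Rinv_le_contravar. apply INR_pos_S. rewrite !S_INR, plus_INR. simpl. lra. }
  replace (/ x - / (x + INR (S (S n))) - / x)%R with (- / (x + INR (S (S n))))%R by ring.
  rewrite Rabs_Ropp, Rabs_right by lra. lra.
Qed.

Lemma digamma_sum x k : (1 <= x)%R ->
  digamma (RtoC (x + INR k)) - digamma (RtoC x) = csum (fun j => / RtoC (x + INR j)) k.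
Proof.
  intro Hx. induction k.
  - simpl. rewrite Rplus_0_r. ring.
  - rewrite csum_S. rewrite <- IHk.
    pose proof (digamma_step (x + INR k) ltac:(pose proof (pos_INR k); lra)) as H.
    replace (x + INR k + 1)%R with (x + INR (S k))%R in H by (rewrite S_INR; ring).
    rewrite RtoC_inv in H by (pose proof (pos_INR k); lra).
    replace (digamma (RtoC (x + INR (S k))) - digamma (RtoC x)) with
      ((digamma (RtoC (x + INR (S k))) - digamma (RtoC (x + INR k))) + (digamma (RtoC (x + INR k)) - digamma (RtoC x))) by ring.
    rewrite H. ring.
Qed.

Lemma Hc_diff (x : R) (k : nat) : (1 <= x)%R ->
  Hc (RtoC (x + INR k) - 1) - Hc (RtoC x - 1) = csum (fun j => / RtoC (x + INR j)) k.
Proof.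
  intro Hx. unfold Hc. rewrite <- (digamma_sum x k Hx).
  replace (RtoC (x + INR k) - 1 + 1) with (RtoC (x + INR k)) by ring.
  replace (RtoC x - 1 + 1) with (RtoC x) by ring. ring.
Qed.

Open Scope C_scope.

Open Scope C_scope.

Lemma RtoC_neq0 (y : R) : (0 < y)%R -> RtoC y <> 0.
Proof. intros H E. apply RtoC_inj in E. lra. Qed.

Lemma Hn_csum m : Hn m = csum (fun j => / RtoC (INR (S j))) m.
Proof. reflexivity. Qed.

Theorem part2a (n : nat) (s : R) : (1 <= s)%R ->
      csum (fun k => Hn (n - k)%nat /
              ((RtoC (INR k) + RtoC s) * (RtoC (INR k) + 1 + RtoC s))) (S n)
      = (RtoC (INR n) + 1) / (RtoC s * (RtoC (INR n) + 1 + RtoC s)) * Hn (S n)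
        - / (RtoC (INR n) + 1 + RtoC s) *
          (Hc (RtoC (INR n) + RtoC s) - Hc (RtoC s - 1)).
Proof.
  intro Hs.
  set (D0 := csum (fun j => / RtoC (s + INR j)) (S n)).
  assert (HD : Hc (RtoC (INR n) + RtoC s) - Hc (RtoC s - 1) = D0).
  { unfold D0. rewrite <- (Hc_diff s (S n) Hs). f_equal. f_equal. rewrite S_INR, !RtoC_plus. ring. }
  rewrite HD.
  set (a := fun k : nat => / RtoC (s + INR k)).
  rewrite (csum_ext_lt _ (fun k => Hn (S n - 1 - k)%nat * (a k - a (S k)))).
  2: { intros k Hk. replace (S n - 1 - k)%nat with (n - k)%nat by lia. unfold a.
       pose proof (pos_INR k).
       assert (RtoC (s + INR k) <> 0) by (apply RtoC_neq0; lra).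
       assert (RtoC (s + INR (S k)) <> 0) by (apply RtoC_neq0; rewrite S_INR; lra).
       rewrite S_INR in *. rewrite !RtoC_plus in *. field. repeat split; auto. }
  rewrite gen_id.
  set (A := RtoC (INR n) + 1 + RtoC s).
  assert (HA : A <> 0) by (unfold A; rewrite <- RtoC_plus; rewrite <- RtoC_plus; apply RtoC_neq0; pose proof (pos_INR n); lra).
  rewrite (csum_ext_lt (fun j => a (S n - S j)%nat / RtoC (INR (S j)))
      (fun j => / A * (/ RtoC (INR (S j)) + / RtoC (s + INR (n - j))))).
  2: { intros j Hj. unfold a. replace (S n - S j)%nat with (n - j)%nat by lia.
       assert (Hnj : INR (n - j) = (INR n - INR j)%R) by (apply minus_INR; lia).
       pose proof (pos_INR (n - j)). pose proof (pos_INR j).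
       assert (RtoC (s + INR (n - j)) <> 0) by (apply RtoC_neq0; lra).
       assert (RtoC (INR (S j)) <> 0) by (apply RtoC_neq0; rewrite S_INR; lra).
       unfold A. rewrite Hnj in *. rewrite S_INR in *. rewrite !RtoC_plus, !RtoC_minus in *.
       field. repeat split; auto. }
  rewrite csum_scal, csum_plus. change (csum (fun j => / RtoC (INR (S j))) (S n)) with (Hn (S n)).
  rewrite (csum_reflect (fun j => / RtoC (s + INR j))). fold D0.
  unfold a. change (INR 0) with 0%R. rewrite Rplus_0_r.
  assert (RtoC s <> 0) by (apply RtoC_neq0; lra).
  unfold A in *. field. split; auto.
Qed.

Theorem part2b (n : nat) (s : R) : (1 <= s)%R ->
      csum (fun k => Hn (n - k)%nat /
              ((RtoC (INR k) + RtoC s) * (RtoC (INR k) + 1 + RtoC s)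
               * (RtoC (INR k) + 2 + RtoC s))) (S n)
      = / 2 * ( Hn (S n) / (RtoC s * (RtoC s + 1))
          - / (RtoC (INR n) + 1 + RtoC s) *
              (Hn (S n) + Hc (RtoC (INR n) + RtoC s) - Hc (RtoC s - 1))
          + / (RtoC (INR n) + 2 + RtoC s) *
              (Hn (S n) + Hc (RtoC (INR n) + 1 + RtoC s) - Hc (RtoC s))).
Proof.
  intro Hs.
  set (D0 := csum (fun j => / RtoC (s + INR j)) (S n)).
  set (D1 := csum (fun j => / RtoC ((s + 1) + INR j)) (S n)).
  assert (HD0 : Hc (RtoC (INR n) + RtoC s) - Hc (RtoC s - 1) = D0).
  { unfold D0. rewrite <- (Hc_diff s (S n) Hs). f_equal. f_equal. rewrite S_INR, !RtoC_plus. ring. }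
  assert (HD1 : Hc (RtoC (INR n) + 1 + RtoC s) - Hc (RtoC s) = D1).
  { unfold D1. rewrite <- (Hc_diff (s + 1) (S n) ltac:(lra)). f_equal; f_equal. rewrite S_INR, !RtoC_plus. ring.
    rewrite RtoC_plus. ring. }
  replace (Hn (S n) + Hc (RtoC (INR n) + RtoC s) - Hc (RtoC s - 1)) with (Hn (S n) + D0) by (rewrite <- HD0; ring).
  replace (Hn (S n) + Hc (RtoC (INR n) + 1 + RtoC s) - Hc (RtoC s)) with (Hn (S n) + D1) by (rewrite <- HD1; ring).
  set (b := fun k : nat => / (RtoC (s + INR k) * RtoC (s + INR k + 1))).
  rewrite (csum_ext_lt _ (fun k => / 2 * (Hn (S n - 1 - k)%nat * (b k - b (S k))))).
  2: { intros k Hk. replace (S n - 1 - k)%nat with (n - k)%nat by lia. unfold b.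
       pose proof (pos_INR k).
       assert (RtoC (s + INR k) <> 0) by (apply RtoC_neq0; lra).
       assert (RtoC (s + INR k + 1) <> 0) by (apply RtoC_neq0; lra).
       assert (RtoC (s + INR k + 2) <> 0) by (apply RtoC_neq0; lra).
       rewrite !S_INR. replace (s + (INR k + 1) + 1)%R with (s + INR k + 2)%R by ring.
       replace (s + (INR k + 1))%R with (s + INR k + 1)%R by ring.
       rewrite !RtoC_plus in *. field. repeat split; auto. }
  rewrite csum_scal, gen_id.
  set (A := RtoC (INR n) + 1 + RtoC s).
  assert (HA : A <> 0) by (unfold A; rewrite <- RtoC_plus; rewrite <- RtoC_plus; apply RtoC_neq0; pose proof (pos_INR n); lra).
  assert (HA1 : RtoC (INR n) + 2 + RtoC s <> 0) by (rewrite <- RtoC_plus; rewrite <- RtoC_plus; apply RtoC_neq0; pose proof (pos_INR n); lra).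
  rewrite (csum_ext_lt (fun j => b (S n - S j)%nat / RtoC (INR (S j)))
      (fun j => / (A * (A + 1)) * / RtoC (INR (S j)) + / A * / RtoC (s + INR (n - j))
                - / (A + 1) * / RtoC ((s + 1) + INR (n - j)))).
  2: { intros j Hj. unfold b. replace (S n - S j)%nat with (n - j)%nat by lia.
       assert (Hnj : INR (n - j) = (INR n - INR j)%R) by (apply minus_INR; lia).
       pose proof (pos_INR (n - j)). pose proof (pos_INR j).
       assert (RtoC (s + INR (n - j)) <> 0) by (apply RtoC_neq0; lra).
       assert (RtoC (s + INR (n - j) + 1) <> 0) by (apply RtoC_neq0; lra).
       assert (RtoC (s + 1 + INR (n - j)) <> 0) by (apply RtoC_neq0; lra).
       assert (RtoC (INR (S j)) <> 0) by (apply RtoC_neq0; rewrite S_INR; lra).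
       assert (A + 1 <> 0) by (unfold A; rewrite <- !RtoC_plus; apply RtoC_neq0; pose proof (pos_INR n); lra).
       unfold A in *. rewrite Hnj in *. rewrite S_INR in *. rewrite !RtoC_plus, !RtoC_minus in *.
       field. repeat split; auto. }
  rewrite csum_minus, csum_plus, !csum_scal. change (csum (fun j => / RtoC (INR (S j))) (S n)) with (Hn (S n)).
  rewrite (csum_reflect (fun j => / RtoC (s + INR j))). fold D0.
  rewrite (csum_reflect (fun j => / RtoC ((s + 1) + INR j))). fold D1.
  unfold b. change (INR 0) with 0%R. rewrite Rplus_0_r.
  assert (RtoC s <> 0) by (apply RtoC_neq0; lra).
  assert (RtoC (s + 1) <> 0) by (apply RtoC_neq0; lra).
  replace (RtoC (INR n) + 2 + RtoC s) with (A + 1) in * by (unfold A; ring).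
  assert (A + 1 <> 0) by auto.
  rewrite RtoC_plus in *. field. repeat split; auto.
Qed.

Open Scope C_scope.

Theorem corollary14 :
  (forall (n : nat) (r s : C),
      not_negint r -> not_negint s -> s <> 0 -> not_negint (r - s) ->
      csum (fun k => Hn (n - 1 - k)%nat /
              ((RtoC (INR k) + s) * cbinom (r + RtoC (INR k) + 1) (r - s + 1))) n
      = Hn n / (s * cbinom r s)
        - / (r - s + 1) *
          csum (fun j => / (RtoC (INR (S j)) *
                  cbinom (RtoC (INR (n - S j)) + r) (r - s + 1))) n)
  /\
  (forall (n : nat) (s : R), (1 <= s)%R ->
      csum (fun k => Hn (n - k)%nat /
              ((RtoC (INR k) + RtoC s) * (RtoC (INR k) + 1 + RtoC s))) (S n)
      = (RtoC (INR n) + 1) / (RtoC s * (RtoC (INR n) + 1 + RtoC s)) * Hn (S n)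
        - / (RtoC (INR n) + 1 + RtoC s) *
          (Hc (RtoC (INR n) + RtoC s) - Hc (RtoC s - 1))
   /\
      csum (fun k => Hn (n - k)%nat /
              ((RtoC (INR k) + RtoC s) * (RtoC (INR k) + 1 + RtoC s)
               * (RtoC (INR k) + 2 + RtoC s))) (S n)
      = / 2 * ( Hn (S n) / (RtoC s * (RtoC s + 1))
          - / (RtoC (INR n) + 1 + RtoC s) *
              (Hn (S n) + Hc (RtoC (INR n) + RtoC s) - Hc (RtoC s - 1))
          + / (RtoC (INR n) + 2 + RtoC s) *
              (Hn (S n) + Hc (RtoC (INR n) + 1 + RtoC s) - Hc (RtoC s)))).
Proof.
  split.
  - intros n r s Hr Hs Hs0 Hrs. apply part1; auto.
  - intros n s Hs. split; [apply part2a | apply part2b]; auto.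
Qed.
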